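(* Let $d\geq1$ and fix a width $p\geq d+3$. For each $k\in\{1,\ldots,p\}$ let $\{B_{kr}:r\geq1\}$ be a set of basis functions. Let $\sigma:\mathbb{R}\to[0,1]$ be a continuous function which is continuously differentiable at at least one point, with nonzero derivative at that point. For $L\geq1$, vectors $W_k^{(1)}\in\mathbb{R}^d$ and $W_k^{(l)}\in\mathbb{R}^p$ ($2\le l\le L$), integers $q_k\geq1$ and real numbers $c_{kr},b_k^{(l)},b$, define the HDANN2 function on $[0,1]^d$ by $$x_k^{(1)}=\sigma\big({W_k^{(1)}}^\top\mathbf{x}+b_k^{(1)}\big),\qquad x_k^{(l)}=\sigma\big({W_k^{(l)}}^\top\mathbf{x}^{(l-1)}+b_k^{(l)}\big)\ (2\le l\le L),\quad k=1,\ldots,p,$$ where $\mathbf{x}^{(l)}=(x_1^{(l)},\ldots,x_p^{(l)})^\top$, and output $\mathrm{HDANN2}(\mathbf{x})=\sum_{k=1}^p\sum_{r=1}^{q_k}c_{kr}B_{kr}(x_k^{(L)})+b$. Then for any continuous $f:[0,1]^d\to\mathbb{R}$ and any $\epsilon>0$ there exist $L\geq1$, $q_k\geq1$, $W_k^{(l)}$ and $c_{kr},b_k^{(l)},b\in\mathbb{R}$ such that $$\sup_{\mathbf{x}\in[0,1]^d}|f(\mathbf{x})-\mathrm{HDANN2}(\mathbf{x})|<\epsilon.$$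
   Context: A set $\{B_r:[0,1]\to\mathbb{R}\,|\,r\geq1\}$ of functions is called a set of basis functions if for every continuous $\phi:[0,1]\to\mathbb{R}$ and every $\epsilon>0$ there exist $q\geq1$ and $c_1,\ldots,c_q,c\in\mathbb{R}$ with $\sup_{x\in[0,1]}|\phi(x)-(\sum_{r=1}^q c_rB_r(x)+c)|<\epsilon$. *)

(* Defs.v *)
From Stdlib Require Import Reals.
From Coquelicot Require Import Coquelicot.
Open Scope R_scope.

Fixpoint rsum (f : nat -> R) (m len : nat) : R :=
  match len with
  | O => 0
  | S l => f m + rsum f (S m) l
  end.
Definition sum1 (q : nat) (F : nat -> R) : R := rsum F 1 q.
Definition sum0 (n : nat) (F : nat -> R) : R := rsum F 0 n.

Definition cont01 (phi : R -> R) : Prop :=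
  forall x, 0 <= x <= 1 -> forall eps, 0 < eps -> exists delta, 0 < delta /\
    forall y, 0 <= y <= 1 -> Rabs (y - x) < delta -> Rabs (phi y - phi x) < eps.

(* Basis functions {B r | r >= 1} on [0,1] (the value B 0 is irrelevant). *)
Definition is_basis (B : nat -> R -> R) : Prop :=
  forall phi : R -> R, cont01 phi -> forall eps, 0 < eps ->
    exists (q : nat) (c : nat -> R) (c0 : R), (1 <= q)%nat /\
      forall x, 0 <= x <= 1 ->
        Rabs (phi x - (sum1 q (fun r => c r * B r x) + c0)) < eps.

(* Points of R^d are represented by x : nat -> R, coordinates 0..d-1. *)
Definition in_cube (d : nat) (x : nat -> R) : Prop :=
  forall i, (i < d)%nat -> 0 <= x i <= 1.

Definition cont_cube (d : nat) (f : (nat -> R) -> R) : Prop :=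
  forall x, in_cube d x -> forall eps, 0 < eps -> exists delta, 0 < delta /\
    forall y, in_cube d y ->
      (forall i, (i < d)%nat -> Rabs (y i - x i) < delta) ->
      Rabs (f y - f x) < eps.

Definition C1_at_nonzero (sigma : R -> R) (x0 : R) : Prop :=
  (exists delta, 0 < delta /\
     forall y, Rabs (y - x0) < delta -> ex_derive sigma y) /\
  continuous (Derive sigma) x0 /\ Derive sigma x0 <> 0.

(* Hidden layers, neurons indexed k = 0..p-1 (paper: 1..p).
   W1 k : R^d, b1 k : first-layer weights/biases;
   W l k : R^p, b l k : weights/biases of layer l (used for 2 <= l <= L).
   layer n x = x^{(n+1)}. *)
Fixpoint layer (sigma : R -> R) (d p : nat)
    (W1 : nat -> nat -> R) (b1 : nat -> R)
    (W : nat -> nat -> nat -> R) (b : nat -> nat -> R)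
    (n : nat) (x : nat -> R) : nat -> R :=
  match n with
  | O => fun k => sigma (sum0 d (fun i => W1 k i * x i) + b1 k)
  | S m => let prev := layer sigma d p W1 b1 W b m x in
           fun k => sigma (sum0 p (fun j => W (S (S m)) k j * prev j)
                            + b (S (S m)) k)
  end.

(* HDANN2 output with L >= 1 layers; B k r is the r-th basis function
   for neuron k (k = 0..p-1, r >= 1), q k >= 1, c k r coefficients. *)
Definition HDANN2 (sigma : R -> R) (d p : nat) (B : nat -> nat -> R -> R)
    (L : nat) (W1 : nat -> nat -> R) (b1 : nat -> R)
    (W : nat -> nat -> nat -> R) (b : nat -> nat -> R)
    (q : nat -> nat) (c : nat -> nat -> R) (b0 : R) (x : nat -> R) : R :=
  let xL := layer sigma d p W1 b1 W b (pred L) x in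
  sum0 p (fun k => sum1 (q k) (fun r => c k r * B k r (xL k))) + b0.

(* Main.v *)
Require Import Defs.
From Stdlib Require Import Reals Lra Lia FunctionalExtensionality List ClassicalEpsilon Classical.
From Coquelicot Require Import Coquelicot.
Open Scope R_scope.

Lemma rsum_ext f g m n : (forall i, (m <= i < m + n)%nat -> f i = g i) -> rsum f m n = rsum g m n.
Proof.
  revert m; induction n; intros m H; simpl; auto.
  rewrite H by lia. f_equal. apply IHn. intros; apply H; lia.
Qed.

Lemma rsum_plus f g m n : rsum (fun i => f i + g i) m n = rsum f m n + rsum g m n.
Proof. revert m; induction n; intros m; simpl; [lra|]. rewrite IHn; lra. Qed.

Lemma rsum_minus f g m n : rsum (fun i => f i - g i) m n = rsum f m n - rsum g m n.
Proof. revert m; induction n; intros m; simpl; [lra|]. rewrite IHn; lra. Qed.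

Lemma rsum_scal c f m n : rsum (fun i => c * f i) m n = c * rsum f m n.
Proof. revert m; induction n; intros m; simpl; [lra|]. rewrite IHn; lra. Qed.

Lemma rsum_zero m n : rsum (fun _ => 0) m n = 0.
Proof. revert m; induction n; intros m; simpl; [lra|]. rewrite IHn; lra. Qed.

Lemma rsum_le f g m n : (forall i, (m <= i < m + n)%nat -> f i <= g i) -> rsum f m n <= rsum g m n.
Proof.
  revert m; induction n; intros m H; simpl; [lra|].
  assert (f m <= g m) by (apply H; lia).
  assert (rsum f (S m) n <= rsum g (S m) n) by (apply IHn; intros; apply H; lia). lra.
Qed.

Lemma rsum_abs f m n : Rabs (rsum f m n) <= rsum (fun i => Rabs (f i)) m n.
Proof.
  revert m; induction n; intros m; simpl. rewrite Rabs_R0; lra.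
  eapply Rle_trans. apply Rabs_triang. specialize (IHn (S m)). lra.
Qed.

Lemma rsum_nonneg f m n : (forall i, (m <= i < m + n)%nat -> 0 <= f i) -> 0 <= rsum f m n.
Proof. intros H. rewrite <- (rsum_zero m n). apply rsum_le. auto. Qed.

Lemma rsum_last f m n : rsum f m (S n) = rsum f m n + f (m + n)%nat.
Proof.
  revert m; induction n; intros m. simpl. rewrite Nat.add_0_r. lra.
  change (rsum f m (S (S n))) with (f m + rsum f (S m) (S n)).
  change (rsum f m (S n)) with (f m + rsum f (S m) n).
  rewrite IHn. replace (S m + n)%nat with (m + S n)%nat by lia. lra.
Qed.

Lemma rsum_delta (v : nat -> R) k m n : (m <= k < m + n)%nat ->
  rsum (fun j => (if Nat.eqb j k then 1 else 0) * v j) m n = v k.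
Proof.
  revert m; induction n; intros m Hk; [lia|]. simpl.
  destruct (Nat.eqb m k) eqn:E.
  - apply Nat.eqb_eq in E; subst.
    rewrite (rsum_ext _ (fun _ => 0)). rewrite rsum_zero; lra.
    intros i Hi. destruct (Nat.eqb i k) eqn:E2; [apply Nat.eqb_eq in E2; lia| lra].
  - apply Nat.eqb_neq in E. rewrite IHn by lia. lra.
Qed.

Lemma rsum_bound_const f m n B : (forall i, (m <= i < m + n)%nat -> f i <= B) -> rsum f m n <= INR n * B.
Proof.
  revert m; induction n; intros m H; simpl. lra.
  assert (f m <= B) by (apply H; lia).
  assert (rsum f (S m) n <= INR n * B) by (apply IHn; intros; apply H; lia).
  destruct n; simpl in *; lra.
Qed.

Lemma rsum_ge_term f m n k : (forall i, 0 <= f i) -> (m <= k < m + n)%nat -> f k <= rsum f m n.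
Proof.
  revert m; induction n; intros m Hf Hk; [lia|]. simpl.
  destruct (Nat.eq_dec m k).
  - subst. assert (0 <= rsum f (S k) n) by (apply rsum_nonneg; auto). lra.
  - assert (f k <= rsum f (S m) n) by (apply IHn; auto; lia). specialize (Hf m). lra.
Qed.

Lemma unif_cont (g : R -> R) : (forall x, continuous g x) -> forall a b eps, 0 < eps ->
  exists mu, 0 < mu /\ forall x y, a <= x <= b -> a <= y <= b -> Rabs (x - y) <= mu -> Rabs (g x - g y) <= eps.
Proof.
  intros Hc a b eps He.
  destruct (@Heine_cor2 g a b) with (eps := mkposreal eps He) as [dl Hd].
  { intros x _. apply continuity_pt_filterlim. apply Hc. }
  exists (dl / 2). split. destruct dl; simpl; lra.
  intros x y Hx Hy Hxy. left. apply Hd; auto. destruct dl; simpl in *; lra.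
Qed.

Lemma Rabs_le_inv a b : Rabs a <= b -> - b <= a <= b.
Proof. unfold Rabs; destruct (Rcase_abs a); intros; lra. Qed.

Lemma rsum_split f m n1 n2 : rsum f m (n1 + n2) = rsum f m n1 + rsum f (m + n1) n2.
Proof.
  revert m; induction n1; intros m; simpl. rewrite Nat.add_0_r; lra.
  rewrite IHn1. replace (S m + n1)%nat with (m + S n1)%nat by lia. lra.
Qed.

Section Frame.
Variable sigma : R -> R.
Variable d p : nat.
Hypothesis sig01 : forall t, 0 <= sigma t <= 1.
Hypothesis sigc : forall t, continuous sigma t.
Variable x0 D : R.
Hypothesis HD : is_derive sigma x0 D.
Hypothesis HDnz : D <> 0.

Lemma deriv_est : forall th, 0 < th -> exists rho, 0 < rho /\ forall h, Rabs h <= rho ->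
  Rabs (sigma (x0 + h) - sigma x0 - D * h) <= th * Rabs h.
Proof.
  intros th Hth. apply is_derive_Reals in HD.
  destruct (HD th Hth) as [dl Hdl].
  exists (dl / 2). split. destruct dl; simpl; lra.
  intros h Hh. destruct (Req_dec h 0) as [->|Hn].
  - rewrite Rplus_0_r, Rabs_R0. replace (sigma x0 - sigma x0 - D * 0) with 0 by ring. rewrite Rabs_R0; lra.
  - assert (Habs: Rabs h < dl) by (destruct dl; simpl in *; lra).
    specialize (Hdl h Hn Habs).
    replace (sigma (x0 + h) - sigma x0 - D * h) with (((sigma (x0 + h) - sigma x0) / h - D) * h) by (field; auto).
    rewrite Rabs_mult. apply Rmult_le_compat_r. apply Rabs_pos. lra.
Qed.

Lemma neuron_est : forall K eps, 0 <= K -> 0 < eps -> exists dl mu, 0 < dl <= 1 /\ 0 < mu /\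
  forall z z', Rabs z <= K -> Rabs (z' - z) <= mu ->
    Rabs (sigma z' - sigma z) <= eps /\
    Rabs ((sigma (x0 + dl * z') - sigma x0) / (dl * D) - z) <= eps.
Proof.
  intros K eps HK He.
  assert (HaD: 0 < Rabs D) by (apply Rabs_pos_lt; auto).
  destruct (deriv_est (eps * Rabs D / (2 * (K + 1)))) as [rho [Hrho Hr]].
  { apply Rdiv_lt_0_compat. apply Rmult_lt_0_compat; lra. lra. }
  set (dl := Rmin 1 (rho / (K + 1))).
  assert (Hdl : 0 < dl <= 1).
  { unfold dl. split. apply Rmin_glb_lt. lra. apply Rdiv_lt_0_compat; lra. apply Rmin_l. }
  assert (Hdl2 : dl * (K + 1) <= rho).
  { unfold dl. assert (Rmin 1 (rho / (K + 1)) <= rho / (K + 1)) by apply Rmin_r.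
    apply Rmult_le_compat_r with (r := K + 1) in H; [|lra].
    replace (rho / (K + 1) * (K + 1)) with rho in H by (field; lra). lra. }
  destruct (unif_cont sigma sigc (- K - 1) (K + 1) eps He) as [mu1 [Hmu1 Hu1]].
  assert (He2 : 0 < eps * dl * Rabs D / 2).
  { apply Rdiv_lt_0_compat; [|lra]. repeat apply Rmult_lt_0_compat; lra. }
  destruct (unif_cont sigma sigc (x0 - K - 1) (x0 + K + 1) _ He2) as [mu2 [Hmu2 Hu2]].
  exists dl, (Rmin 1 (Rmin mu1 mu2)). split; [auto|]. split.
  { apply Rmin_glb_lt; [lra|]. apply Rmin_glb_lt; lra. }
  intros z z' Hz Hzz.
  assert (H1 : Rabs (z' - z) <= 1) by (eapply Rle_trans; [apply Hzz| apply Rmin_l]).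
  assert (H2 : Rabs (z' - z) <= mu1).
  { eapply Rle_trans; [apply Hzz|]. eapply Rle_trans; [apply Rmin_r| apply Rmin_l]. }
  assert (H3 : Rabs (z' - z) <= mu2).
  { eapply Rle_trans; [apply Hzz|]. eapply Rle_trans; [apply Rmin_r| apply Rmin_r]. }
  apply Rabs_le_inv in Hz as Hz'. apply Rabs_le_inv in H1 as H1'.
  split.
  - apply Hu1; try lra.
  - assert (Hdz : Rabs (dl * z) <= rho).
    { rewrite Rabs_mult, Rabs_right by lra. nra. }
    specialize (Hr _ Hdz).
    assert (Hb1 : Rabs ((sigma (x0 + dl * z) - sigma x0) / (dl * D) - z) <= eps / 2).
    { replace ((sigma (x0 + dl * z) - sigma x0) / (dl * D) - z) with
        ((sigma (x0 + dl * z) - sigma x0 - D * (dl * z)) / (dl * D)) by (field; split; lra).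
      rewrite Rabs_div by (apply Rmult_integral_contrapositive; split; lra).
      rewrite Rabs_mult, (Rabs_right dl) by lra.
      apply Rle_div_l. apply Rmult_lt_0_compat; lra.
      eapply Rle_trans; [apply Hr|].
      rewrite Rabs_mult, (Rabs_right dl) by lra.
      assert (Rabs z <= K + 1) by lra.
      assert (Hq : eps * Rabs D / (2 * (K + 1)) * (dl * Rabs z) <= eps * Rabs D / (2 * (K + 1)) * (dl * (K+1))).
      { apply Rmult_le_compat_l. left; apply Rdiv_lt_0_compat; [apply Rmult_lt_0_compat|]; lra. nra. }
      replace (eps * Rabs D / (2 * (K + 1)) * (dl * (K + 1))) with (eps / 2 * (dl * Rabs D)) in Hq by (field; lra).
      lra. }
    assert (Hb2 : Rabs (sigma (x0 + dl * z') - sigma (x0 + dl * z)) <= eps * dl * Rabs D / 2).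
    { apply Hu2.
      - assert (Rabs (dl * z') <= K + 1).
        { rewrite Rabs_mult, Rabs_right by lra. assert (Rabs z' <= K + 1).
          { replace z' with (z + (z' - z)) by ring. eapply Rle_trans. apply Rabs_triang. lra. }
          nra. }
        apply Rabs_le_inv in H. lra.
      - assert (Rabs (dl * z) <= K + 1) by (rewrite Rabs_mult, Rabs_right by lra; nra).
        apply Rabs_le_inv in H. lra.
      - replace (x0 + dl * z' - (x0 + dl * z)) with (dl * (z' - z)) by ring.
        rewrite Rabs_mult, Rabs_right by lra. nra. }
    replace ((sigma (x0 + dl * z') - sigma x0) / (dl * D) - z) with
      ((sigma (x0 + dl * z') - sigma (x0 + dl * z)) / (dl * D) + ((sigma (x0 + dl * z) - sigma x0) / (dl * D) - z))
      by (field; split; lra).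
    eapply Rle_trans. apply Rabs_triang.
    assert (Rabs ((sigma (x0 + dl * z') - sigma (x0 + dl * z)) / (dl * D)) <= eps / 2).
    { rewrite Rabs_div by (apply Rmult_integral_contrapositive; split; lra).
      rewrite Rabs_mult, (Rabs_right dl) by lra.
      apply Rle_div_l. apply Rmult_lt_0_compat; lra.
      replace (eps / 2 * (dl * Rabs D)) with (eps * dl * Rabs D / 2) by field. auto. }
    lra.
Qed.

Definition Lay := layer sigma d p.

Definition approxE (v : (nat -> R) -> nat -> R) : Prop :=
  forall eps, 0 < eps -> exists n W1 b1 W bl (a s : nat -> R),
    forall x, in_cube d x -> forall k, (k < p)%nat ->
      Rabs (a k + s k * Lay W1 b1 W bl n x k - v x k) <= eps.

Definition bndv (v : (nat -> R) -> nat -> R) : Prop :=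
  exists U, forall x, in_cube d x -> forall k, (k < p)%nat -> Rabs (v x k) <= U.

Definition opval (m : nat) (kind : nat -> bool) (w : nat -> nat -> R) (b : nat -> R) (y : nat -> R) (k : nat) : R :=
  let z := sum0 m (fun j => w k j * y j) + b k in if kind k then sigma z else z.

Lemma approxE_lim v : (forall eps, 0 < eps -> exists v', approxE v' /\
   forall x, in_cube d x -> forall k, (k < p)%nat -> Rabs (v' x k - v x k) <= eps) -> approxE v.
Proof.
  intros H eps He. destruct (H (eps/2)) as [v' [Hv' Hc]]; [lra|].
  destruct (Hv' (eps/2)) as (n & W1 & b1 & W & bl & a & s & Hn); [lra|].
  exists n, W1, b1, W, bl, a, s. intros x Hx k Hk.
  specialize (Hn x Hx k Hk). specialize (Hc x Hx k Hk).
  replace (a k + s k * Lay W1 b1 W bl n x k - v x k) with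
    ((a k + s k * Lay W1 b1 W bl n x k - v' x k) + (v' x k - v x k)) by ring.
  eapply Rle_trans. apply Rabs_triang. lra.
Qed.

Lemma approxE_ext v v' : (forall x, in_cube d x -> forall k, (k < p)%nat -> v x k = v' x k) ->
  approxE v -> approxE v'.
Proof.
  intros He H eps Heps. destruct (H eps Heps) as (n & W1 & b1 & W & bl & a & s & Hn).
  exists n, W1, b1, W, bl, a, s. intros x Hx k Hk. rewrite <- He by auto. auto.
Qed.

Lemma layer_ext W1 b1 W W' bl bl' n : (forall l, (l <= S n)%nat -> W' l = W l /\ bl' l = bl l) ->
  Lay W1 b1 W' bl' n = Lay W1 b1 W bl n.
Proof.
  induction n; intros H; extensionality x; [reflexivity|].
  unfold Lay in *; simpl. rewrite IHn by (intros; apply H; lia).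
  destruct (H (S (S n))) as [-> ->]; [lia|]. reflexivity.
Qed.

Lemma sum_w_abs m (w : nat -> R) (u v : nat -> R) eta : (forall j, (j < m)%nat -> Rabs (u j - v j) <= eta) ->
  Rabs (sum0 m (fun j => w j * u j) - sum0 m (fun j => w j * v j)) <= sum0 m (fun j => Rabs (w j)) * eta.
Proof.
  intros H. unfold sum0. rewrite <- rsum_minus. eapply Rle_trans. apply rsum_abs.
  rewrite <- (Rmult_comm eta), <- rsum_scal. apply rsum_le. intros i Hi.
  replace (w i * u i - w i * v i) with (w i * (u i - v i)) by ring. rewrite Rabs_mult.
  assert (Rabs (u i - v i) <= eta) by (apply H; lia). pose proof (Rabs_pos (w i)). nra.
Qed.

Lemma sum_w_bound m (w : nat -> R) (v : nat -> R) U : (forall j, (j < m)%nat -> Rabs (v j) <= U) ->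
  Rabs (sum0 m (fun j => w j * v j)) <= sum0 m (fun j => Rabs (w j)) * U.
Proof.
  intros H. unfold sum0. eapply Rle_trans. apply rsum_abs.
  rewrite <- (Rmult_comm U), <- rsum_scal. apply rsum_le. intros i Hi.
  rewrite Rabs_mult. assert (Rabs (v i) <= U) by (apply H; lia). pose proof (Rabs_pos (w i)). nra.
Qed.

Lemma step_core m (kind : nat -> bool) (w : nat -> nat -> R) (b : nat -> R) U eps :
  0 <= U -> 0 < eps -> exists dl eta, 0 < dl <= 1 /\ 0 < eta /\
  forall (y u : nat -> R) k, (k < p)%nat -> (forall j, (j < m)%nat -> Rabs (y j) <= U) ->
    (forall j, (j < m)%nat -> Rabs (u j - y j) <= eta) ->
    let z' := sum0 m (fun j => w k j * u j) + b k in
    Rabs ((if kind k then 0 else - sigma x0 / (dl * D)) + (if kind k then 1 else / (dl * D)) *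
            sigma ((if kind k then 0 else x0) + (if kind k then 1 else dl) * z') - opval m kind w b y k) <= eps.
Proof.
  intros HU He.
  set (WS := sum0 p (fun k => sum0 m (fun j => Rabs (w k j)))).
  set (BS := sum0 p (fun k => Rabs (b k))).
  assert (HWS : 0 <= WS) by (apply rsum_nonneg; intros; apply rsum_nonneg; intros; apply Rabs_pos).
  assert (HBS : 0 <= BS) by (apply rsum_nonneg; intros; apply Rabs_pos).
  destruct (neuron_est (WS * U + BS) eps) as (dl & mu & Hdl & Hmu & Hn); [nra|auto|].
  exists dl, (mu / (WS + 1)). split; auto. split. apply Rdiv_lt_0_compat; lra.
  intros y u k Hk Hy Hu z'.
  assert (Hwk : sum0 m (fun j => Rabs (w k j)) <= WS).
  { unfold WS, sum0. apply (rsum_ge_term (fun k => rsum (fun j => Rabs (w k j)) 0 m)).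
    intros; apply rsum_nonneg; intros; apply Rabs_pos. lia. }
  assert (Hbk : Rabs (b k) <= BS).
  { unfold BS, sum0. apply (rsum_ge_term (fun k => Rabs (b k))). intros; apply Rabs_pos. lia. }
  set (z := sum0 m (fun j => w k j * y j) + b k).
  assert (Hz : Rabs z <= WS * U + BS).
  { unfold z. eapply Rle_trans. apply Rabs_triang.
    assert (Rabs (sum0 m (fun j => w k j * y j)) <= sum0 m (fun j => Rabs (w k j)) * U) by (apply sum_w_bound; auto).
    nra. }
  assert (Hzz : Rabs (z' - z) <= mu).
  { unfold z', z. replace (sum0 m (fun j => w k j * u j) + b k - (sum0 m (fun j => w k j * y j) + b k)) with
      (sum0 m (fun j => w k j * u j) - sum0 m (fun j => w k j * y j)) by ring.
    eapply Rle_trans. apply sum_w_abs. apply Hu.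
    assert (0 <= sum0 m (fun j => Rabs (w k j))) by (apply rsum_nonneg; intros; apply Rabs_pos).
    apply Rle_trans with ((WS + 1) * (mu / (WS + 1))).
    apply Rmult_le_compat_r. left; apply Rdiv_lt_0_compat; lra. lra.
    right; field; lra. }
  destruct (Hn z z' Hz Hzz) as [Hs Ha].
  unfold opval. fold z. destruct (kind k).
  - replace (0 + 1 * z') with z' by ring.
    replace (0 + 1 * sigma z' - sigma z) with (sigma z' - sigma z) by ring. auto.
  - replace (- sigma x0 / (dl * D) + / (dl * D) * sigma (x0 + dl * z') - z) with
      ((sigma (x0 + dl * z') - sigma x0) / (dl * D) - z) by (field; split; lra). auto.
Qed.

Lemma approxE_step (kind : nat -> bool) (w : nat -> nat -> R) (b : nat -> R) v :
  approxE v -> bndv v -> approxE (fun x k => opval p kind w b (v x) k).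
Proof.
  intros Hv [U HU] eps He.
  assert (HU0 : 0 <= U \/ p = 0%nat).
  { destruct p as [|p']; [right; auto|left].
    assert (Hc : in_cube d (fun _ => 0)) by (intros i _; lra).
    specialize (HU _ Hc 0%nat ltac:(lia)). eapply Rle_trans; [apply Rabs_pos| apply HU]. }
  destruct HU0 as [HU0|Hp0].
  2:{ exists 0%nat, (fun _ _ => 0), (fun _ => 0), (fun _ _ _ => 0), (fun _ _ => 0), (fun _ => 0), (fun _ => 0).
      intros; lia. }
  destruct (step_core p kind w b U eps HU0 He) as (dl & eta & Hdl & Heta & Hc).
  destruct (Hv eta Heta) as (n & W1 & b1 & W & bl & a & s & Hn).
  set (g := fun k => if kind k then 1 else dl).
  set (c := fun k => if kind k then 0 else x0).
  set (newW := fun k j => g k * w k j * s j).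
  set (newb := fun k => c k + g k * (b k + sum0 p (fun j => w k j * a j))).
  set (W' := fun l => if Nat.eqb l (S (S n)) then newW else W l).
  set (bl' := fun l => if Nat.eqb l (S (S n)) then newb else bl l).
  exists (S n), W1, b1, W', bl', (fun k => if kind k then 0 else - sigma x0 / (dl * D)),
    (fun k => if kind k then 1 else / (dl * D)).
  intros x Hx k Hk.
  assert (Hlay : Lay W1 b1 W' bl' (S n) x k =
     sigma (c k + g k * (sum0 p (fun j => w k j * (a j + s j * Lay W1 b1 W bl n x j)) + b k))).
  { unfold Lay at 1. simpl. fold (Lay W1 b1 W' bl' n).
    rewrite (layer_ext W1 b1 W W' bl bl').
    2:{ intros l Hl. unfold W', bl'. destruct (Nat.eqb l (S (S n))) eqn:E; [apply Nat.eqb_eq in E; lia|auto]. }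
    unfold W', bl'. rewrite Nat.eqb_refl. f_equal. unfold newW, newb, sum0.
    replace (rsum (fun j => w k j * (a j + s j * Lay W1 b1 W bl n x j)) 0 p) with
      (rsum (fun j => w k j * a j) 0 p + rsum (fun j => w k j * s j * Lay W1 b1 W bl n x j) 0 p).
    2:{ rewrite <- rsum_plus. apply rsum_ext. intros; ring. }
    replace (rsum (fun j => g k * w k j * s j * Lay W1 b1 W bl n x j) 0 p) with
      (g k * rsum (fun j => w k j * s j * Lay W1 b1 W bl n x j) 0 p).
    2:{ rewrite <- rsum_scal. apply rsum_ext. intros; ring. }
    ring. }
  rewrite Hlay.
  specialize (Hc (v x) (fun j => a j + s j * Lay W1 b1 W bl n x j) k Hk).
  simpl in Hc. unfold g, c. apply Hc.
  - intros j Hj. apply HU; auto.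
  - intros j Hj. apply Hn; auto.
Qed.

Lemma approxE_base (kind : nat -> bool) (w : nat -> nat -> R) (b : nat -> R) :
  approxE (fun x k => opval d kind w b x k).
Proof.
  intros eps He.
  destruct (step_core d kind w b 1 eps ltac:(lra) He) as (dl & eta & Hdl & Heta & Hc).
  set (g := fun k => if kind k then 1 else dl).
  set (c := fun k => if kind k then 0 else x0).
  exists 0%nat, (fun k i => g k * w k i), (fun k => c k + g k * b k), (fun _ _ _ => 0), (fun _ _ => 0),
    (fun k => if kind k then 0 else - sigma x0 / (dl * D)),
    (fun k => if kind k then 1 else / (dl * D)).
  intros x Hx k Hk.
  assert (Hlay : Lay (fun k i => g k * w k i) (fun k => c k + g k * b k) (fun _ _ _ => 0) (fun _ _ => 0) 0 x k =
     sigma (c k + g k * (sum0 d (fun j => w k j * x j) + b k))).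
  { unfold Lay. simpl. f_equal. unfold sum0.
    replace (rsum (fun i => g k * w k i * x i) 0 d) with (g k * rsum (fun i => w k i * x i) 0 d).
    2:{ rewrite <- rsum_scal. apply rsum_ext. intros; ring. }
    ring. }
  rewrite Hlay.
  specialize (Hc x x k Hk). simpl in Hc. unfold g, c. apply Hc.
  - intros j Hj. specialize (Hx j Hj). apply Rabs_le; lra.
  - intros j Hj. rewrite Rminus_diag, Rabs_R0. lra.
Qed.

End Frame.

Record LF := mkLF { fx : nat -> R; fa : R; ft : R; fu : R; f0 : R }.

Section States.
Variable sigma : R -> R.
Variable d p : nat.
Hypothesis sig01 : forall t, 0 <= sigma t <= 1.
Hypothesis sigc : forall t, continuous sigma t.
Variable x0 D : R.
Hypothesis HD : is_derive sigma x0 D.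
Hypothesis HDnz : D <> 0.
Hypothesis Hp : (d + 3 <= p)%nat.

Definition st (a t u : (nat -> R) -> R) (x : nat -> R) (k : nat) : R :=
  if Nat.ltb k d then x k else if Nat.eqb k d then a x else if Nat.eqb k (S d) then t x
  else if Nat.eqb k (S (S d)) then u x else 0.

Definition bnd (g : (nat -> R) -> R) := exists B, forall x, in_cube d x -> Rabs (g x) <= B.

Definition evalLF (F : LF) (x : nat -> R) (a t u : R) :=
  sum0 d (fun i => fx F i * x i) + fa F * a + ft F * t + fu F * u + f0 F.

Definition appK (b : bool) (z : R) := if b then sigma z else z.

Definition row (F : LF) (j : nat) : R :=
  if Nat.ltb j d then fx F j else if Nat.eqb j d then fa F else if Nat.eqb j (S d) then ft F
  else if Nat.eqb j (S (S d)) then fu F else 0.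

Lemma row_sum F a t u x : sum0 p (fun j => row F j * st a t u x j) + f0 F = evalLF F x (a x) (t x) (u x).
Proof.
  unfold sum0, evalLF. replace p with (d + (3 + (p - d - 3)))%nat by lia.
  rewrite rsum_split.
  assert (H1 : rsum (fun j => row F j * st a t u x j) 0 d = rsum (fun i => fx F i * x i) 0 d).
  { apply rsum_ext. intros i Hi. unfold row, st.
    replace (Nat.ltb i d) with true by (symmetry; apply Nat.ltb_lt; lia). auto. }
  assert (H2 : rsum (fun j => row F j * st a t u x j) (0 + d) (3 + (p - d - 3)) = fa F * a x + ft F * t x + fu F * u x).
  { simpl.
    rewrite (rsum_ext _ (fun _ => 0)).
    2:{ intros i Hi. unfold row, st.
        replace (Nat.ltb i d) with false by (symmetry; apply Nat.ltb_ge; lia).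
        replace (Nat.eqb i d) with false by (symmetry; apply Nat.eqb_neq; lia).
        replace (Nat.eqb i (S d)) with false by (symmetry; apply Nat.eqb_neq; lia).
        replace (Nat.eqb i (S (S d))) with false by (symmetry; apply Nat.eqb_neq; lia). ring. }
    rewrite rsum_zero. unfold row, st.
    replace (Nat.ltb d d) with false by (symmetry; apply Nat.ltb_ge; lia).
    replace (Nat.ltb (S d) d) with false by (symmetry; apply Nat.ltb_ge; lia).
    replace (Nat.ltb (S (S d)) d) with false by (symmetry; apply Nat.ltb_ge; lia).
    rewrite Nat.eqb_refl.
    replace (Nat.eqb (S d) d) with false by (symmetry; apply Nat.eqb_neq; lia).
    replace (Nat.eqb (S (S d)) d) with false by (symmetry; apply Nat.eqb_neq; lia).
    rewrite Nat.eqb_refl.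
    replace (Nat.eqb (S (S d)) (S d)) with false by (symmetry; apply Nat.eqb_neq; lia).
    rewrite Nat.eqb_refl. ring. }
  rewrite H1, H2. unfold sum0. ring.
Qed.

Lemma st_bnd a t u : bnd a -> bnd t -> bnd u -> bndv d p (st a t u).
Proof.
  intros [Ba HBa] [Bt HBt] [Bu HBu].
  exists (1 + Rabs Ba + Rabs Bt + Rabs Bu). intros x Hx k Hk.
  pose proof (Rabs_pos Ba). pose proof (Rabs_pos Bt). pose proof (Rabs_pos Bu).
  pose proof (Rle_abs Ba). pose proof (Rle_abs Bt). pose proof (Rle_abs Bu).
  unfold st. destruct (Nat.ltb k d) eqn:E1.
  { apply Nat.ltb_lt in E1. specialize (Hx k E1). rewrite Rabs_right by lra. lra. }
  destruct (Nat.eqb k d). specialize (HBa x Hx). lra.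
  destruct (Nat.eqb k (S d)). specialize (HBt x Hx). lra.
  destruct (Nat.eqb k (S (S d))). specialize (HBu x Hx). lra.
  rewrite Rabs_R0. lra.
Qed.

Lemma trans (ka kt ku : bool) (Fa Ft Fu : LF) a t u :
  approxE sigma d p (st a t u) -> bnd a -> bnd t -> bnd u ->
  approxE sigma d p (st (fun x => appK ka (evalLF Fa x (a x) (t x) (u x)))
                        (fun x => appK kt (evalLF Ft x (a x) (t x) (u x)))
                        (fun x => appK ku (evalLF Fu x (a x) (t x) (u x)))).
Proof.
  intros HE Ha Ht Hu.
  set (kind := fun k => if Nat.eqb k d then ka else if Nat.eqb k (S d) then kt
                        else if Nat.eqb k (S (S d)) then ku else false).
  set (Z := mkLF (fun _ => 0) 0 0 0 0).
  set (FF := fun k => if Nat.eqb k d then Fa else if Nat.eqb k (S d) then Ft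
                        else if Nat.eqb k (S (S d)) then Fu else Z).
  set (w := fun k j => if Nat.ltb k d then (if Nat.eqb j k then 1 else 0) else row (FF k) j).
  set (b := fun k => if Nat.ltb k d then 0 else f0 (FF k)).
  eapply approxE_ext.
  2:{ apply (approxE_step sigma d p sigc x0 D HD HDnz kind w b); [apply HE|]. apply st_bnd; auto. }
  intros x Hx k Hk. simpl. unfold opval.
  destruct (Nat.ltb k d) eqn:E1.
  - apply Nat.ltb_lt in E1. unfold w, b, kind. rewrite (proj2 (Nat.ltb_lt k d) E1).
    replace (Nat.eqb k d) with false by (symmetry; apply Nat.eqb_neq; lia).
    replace (Nat.eqb k (S d)) with false by (symmetry; apply Nat.eqb_neq; lia).
    replace (Nat.eqb k (S (S d))) with false by (symmetry; apply Nat.eqb_neq; lia).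
    unfold sum0. rewrite rsum_delta by lia. unfold st. rewrite (proj2 (Nat.ltb_lt k d) E1). ring.
  - unfold w, b. rewrite E1. unfold sum0. fold (sum0 p (fun j => row (FF k) j * st a t u x j)).
    rewrite row_sum. unfold st. rewrite E1. unfold kind, FF.
    destruct (Nat.eqb k d). reflexivity.
    destruct (Nat.eqb k (S d)). reflexivity.
    destruct (Nat.eqb k (S (S d))). reflexivity.
    unfold Z, evalLF. simpl. unfold sum0. rewrite (rsum_ext _ (fun _ => 0)) by (intros; ring).
    rewrite rsum_zero. ring.
Qed.

Lemma start : approxE sigma d p (st (fun _ => 0) (fun _ => 0) (fun _ => 0)).
Proof.
  eapply approxE_ext.
  2:{ apply (approxE_base sigma d p sigc x0 D HD HDnz (fun _ => false)
         (fun k i => if Nat.ltb k d then (if Nat.eqb i k then 1 else 0) else 0) (fun _ => 0)). }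
  intros x Hx k Hk. unfold opval, st. destruct (Nat.ltb k d) eqn:E1.
  - apply Nat.ltb_lt in E1. unfold sum0. rewrite rsum_delta by lia. ring.
  - unfold sum0. rewrite (rsum_ext _ (fun _ => 0)) by (intros; ring). rewrite rsum_zero.
    destruct (Nat.eqb k d); [ring|]. destruct (Nat.eqb k (S d)); [ring|].
    destruct (Nat.eqb k (S (S d))); ring.
Qed.

End States.
Notation stP3 := st.

Fixpoint nsum (sigma : R -> R) (l : list (R * R * R)) (s : R) : R :=
  match l with
  | nil => 0
  | (c, al, be) :: l' => c * sigma (al * s + be) + nsum sigma l' s
  end.

Fixpoint nabs (l : list (R * R * R)) : R :=
  match l with
  | nil => 0
  | (c, _, _) :: l' => Rabs c + nabs l'
  end.

Lemma nsum_bound sigma l s : (forall t, 0 <= sigma t <= 1) -> Rabs (nsum sigma l s) <= nabs l.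
Proof.
  intros H01. induction l as [|[[c al] be] l IH]; simpl. rewrite Rabs_R0; lra.
  eapply Rle_trans. apply Rabs_triang. rewrite Rabs_mult.
  specialize (H01 (al * s + be)). rewrite (Rabs_right (sigma _)) by lra.
  pose proof (Rabs_pos c). nra.
Qed.

Section Ops.
Variable sigma : R -> R.
Variable d p : nat.
Hypothesis sig01 : forall t, 0 <= sigma t <= 1.
Hypothesis sigc : forall t, continuous sigma t.
Variable x0 D : R.
Hypothesis HD : is_derive sigma x0 D.
Hypothesis HDnz : D <> 0.
Hypothesis Hp : (d + 3 <= p)%nat.

Notation E := (approxE sigma d p).
Notation st := (st d).
Notation bnd := (bnd d).

Lemma st_ext a t u a' t' u' : (forall x, in_cube d x -> a x = a' x /\ t x = t' x /\ u x = u' x) ->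
  E (st a t u) -> E (st a' t' u').
Proof.
  intros H. apply approxE_ext. intros x Hx k Hk. destruct (H x Hx) as (H1 & H2 & H3).
  unfold stP3. rewrite H1, H2, H3. auto.
Qed.

Definition zF := mkLF (fun _ => 0) 0 0 0 0.
Definition LFa (ca ct cu c0 : R) := mkLF (fun _ => 0) ca ct cu c0.

Lemma evalLF_a ca ct cu c0 x a t u : evalLF d (LFa ca ct cu c0) x a t u = ca * a + ct * t + cu * u + c0.
Proof. unfold evalLF, LFa; simpl. unfold sum0. rewrite (rsum_ext _ (fun _ => 0)) by (intros; ring). rewrite rsum_zero. ring. Qed.

Lemma bnd_const c : bnd (fun _ => c).
Proof. exists (Rabs c). intros; lra. Qed.

Lemma bnd_plus f g : bnd f -> bnd g -> bnd (fun x => f x + g x).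
Proof. intros [B1 H1] [B2 H2]. exists (B1 + B2). intros x Hx. eapply Rle_trans. apply Rabs_triang.
  specialize (H1 x Hx); specialize (H2 x Hx); lra. Qed.

Lemma bnd_sig g : bnd (fun x => sigma (g x)).
Proof. exists 1. intros. specialize (sig01 (g x)). rewrite Rabs_right; lra. Qed.

Lemma bnd_scal c g : bnd g -> bnd (fun x => c * g x).
Proof. intros [B H]. exists (Rabs c * B). intros x Hx. rewrite Rabs_mult. apply Rmult_le_compat_l. apply Rabs_pos. auto. Qed.

Lemma bnd_nsum l g : bnd (fun x => nsum sigma l (g x)).
Proof. exists (nabs l). intros. apply nsum_bound; auto. Qed.

Lemma gen_step ka kt ku ca1 ct1 cu1 c01 ca2 ct2 cu2 c02 ca3 ct3 cu3 c03 a t u :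
  E (st a t u) -> bnd a -> bnd t -> bnd u ->
  E (st (fun x => appK sigma ka (ca1 * a x + ct1 * t x + cu1 * u x + c01))
        (fun x => appK sigma kt (ca2 * a x + ct2 * t x + cu2 * u x + c02))
        (fun x => appK sigma ku (ca3 * a x + ct3 * t x + cu3 * u x + c03))).
Proof.
  intros HE Ha Ht Hu.
  eapply st_ext. 2:{ apply (trans sigma d p sigc x0 D HD HDnz Hp ka kt ku (LFa ca1 ct1 cu1 c01) (LFa ca2 ct2 cu2 c02) (LFa ca3 ct3 cu3 c03) a t u); auto. }
  intros x Hx. cbv beta. rewrite !evalLF_a. auto.
Qed.

Lemma add_t_sig i al be c a t : (i < d)%nat ->
  E (st a t (fun _ => 0)) -> bnd a -> bnd t ->
  E (st a (fun x => t x + c * sigma (al * x i + be)) (fun _ => 0)).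
Proof.
  intros Hi HE Ha Ht.
  assert (H1 : E (st a t (fun x => sigma (al * x i + be)))).
  { eapply st_ext.
    2:{ apply (trans sigma d p sigc x0 D HD HDnz Hp false false true (LFa 1 0 0 0) (LFa 0 1 0 0)
             (mkLF (fun j => (if Nat.eqb j i then 1 else 0) * al) 0 0 0 be) a t (fun _ => 0)); auto. apply bnd_const. }
    intros x Hx. cbv beta. rewrite !evalLF_a. simpl. split; [ring|]. split; [ring|].
    unfold evalLF; simpl. unfold sum0.
    rewrite (rsum_ext _ (fun j => (if Nat.eqb j i then 1 else 0) * (al * x j))) by (intros; ring).
    rewrite rsum_delta by lia. f_equal. ring. }
  eapply st_ext.
  2:{ apply (gen_step false false false 1 0 0 0 0 1 c 0 0 0 0 0 a t (fun x => sigma (al * x i + be))); auto. apply bnd_sig. }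
  intros x Hx. simpl. split; [ring|]. split; ring.
Qed.

Lemma add_t_const c a t : E (st a t (fun _ => 0)) -> bnd a -> bnd t ->
  E (st a (fun x => t x + c) (fun _ => 0)).
Proof.
  intros HE Ha Ht. eapply st_ext.
  2:{ apply (gen_step false false false 1 0 0 0 0 1 0 c 0 0 0 0 a t (fun _ => 0)); auto. apply bnd_const. }
  intros x Hx. simpl. split; [ring|]. split; ring.
Qed.

Lemma add_t_nsum i l a : (i < d)%nat -> bnd a -> forall t0,
  E (st a t0 (fun _ => 0)) -> bnd t0 ->
  E (st a (fun x => t0 x + nsum sigma l (x i)) (fun _ => 0)).
Proof.
  intros Hi Ha. induction l as [|[[c al] be] l IH]; intros t0 H Hb; simpl.
  - eapply st_ext; [|apply H]. intros; simpl; split; [auto|split; ring].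
  - assert (H2 : E (st a (fun x => t0 x + c * sigma (al * x i + be)) (fun _ => 0))) by (apply add_t_sig; auto).
    specialize (IH _ H2 ltac:(apply bnd_plus; auto; apply bnd_scal; apply bnd_sig)).
    eapply st_ext; [|apply IH]. intros; simpl; split; [auto|split; ring].
Qed.

Lemma add_t_net i l c0 a t : (i < d)%nat ->
  E (st a t (fun _ => 0)) -> bnd a -> bnd t ->
  E (st a (fun x => t x + (c0 + nsum sigma l (x i))) (fun _ => 0)).
Proof.
  intros Hi HE Ha Ht.
  assert (H : E (st a (fun x => t x + c0) (fun _ => 0))) by (apply add_t_const; auto).
  assert (Hb : bnd (fun x => t x + c0)) by (apply bnd_plus; auto; apply bnd_const).
  eapply st_ext; [|apply (add_t_nsum i l a Hi Ha _ H Hb)]. intros; simpl; split; [auto|split; ring].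
Qed.

Lemma add_a_sig al be c a t : E (st a t (fun _ => 0)) -> bnd a -> bnd t ->
  E (st (fun x => a x + c * sigma (al * t x + be)) t (fun _ => 0)).
Proof.
  intros HE Ha Ht.
  assert (H1 : E (st a t (fun x => sigma (al * t x + be)))).
  { eapply st_ext.
    2:{ apply (gen_step false false true 1 0 0 0 0 1 0 0 0 al 0 be a t (fun _ => 0)); auto. apply bnd_const. }
    intros x Hx. simpl. split; [ring|]. split; [ring|]. f_equal; ring. }
  eapply st_ext.
  2:{ apply (gen_step false false false 1 0 c 0 0 1 0 0 0 0 0 0 a t (fun x => sigma (al * t x + be))); auto. apply bnd_sig. }
  intros x Hx. simpl. split; [ring|]. split; ring.
Qed.

Lemma add_a_const c a t : E (st a t (fun _ => 0)) -> bnd a -> bnd t ->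
  E (st (fun x => a x + c) t (fun _ => 0)).
Proof.
  intros HE Ha Ht. eapply st_ext.
  2:{ apply (gen_step false false false 1 0 0 c 0 1 0 0 0 0 0 0 a t (fun _ => 0)); auto. apply bnd_const. }
  intros x Hx. simpl. split; [ring|]. split; ring.
Qed.

Lemma add_a_nsum l t : bnd t -> forall a0,
  E (st a0 t (fun _ => 0)) -> bnd a0 ->
  E (st (fun x => a0 x + nsum sigma l (t x)) t (fun _ => 0)).
Proof.
  intros Ht. induction l as [|[[c al] be] l IH]; intros a0 H Hb; simpl.
  - eapply st_ext; [|apply H]. intros; simpl; split; [ring|split; ring].
  - assert (H2 : E (st (fun x => a0 x + c * sigma (al * t x + be)) t (fun _ => 0))) by (apply add_a_sig; auto).
    specialize (IH _ H2 ltac:(apply bnd_plus; auto; apply bnd_scal; apply bnd_sig)).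
    eapply st_ext; [|apply IH]. intros; simpl; split; [ring|split; ring].
Qed.

Lemma add_a_net l c0 a t : E (st a t (fun _ => 0)) -> bnd a -> bnd t ->
  E (st (fun x => a x + (c0 + nsum sigma l (t x))) t (fun _ => 0)).
Proof.
  intros HE Ha Ht.
  assert (H : E (st (fun x => a x + c0) t (fun _ => 0))) by (apply add_a_const; auto).
  assert (Hb : bnd (fun x => a x + c0)) by (apply bnd_plus; auto; apply bnd_const).
  eapply st_ext; [|apply (add_a_nsum l t Ht _ H Hb)]. intros; simpl; split; [ring|split; ring].
Qed.

Lemma reset_t a t : E (st a t (fun _ => 0)) -> bnd a -> bnd t -> E (st a (fun _ => 0) (fun _ => 0)).
Proof.
  intros HE Ha Ht. eapply st_ext.
  2:{ apply (gen_step false false false 1 0 0 0 0 0 0 0 0 0 0 0 a t (fun _ => 0)); auto. apply bnd_const. }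
  intros x Hx. simpl. split; [ring|]. split; ring.
Qed.

End Ops.

Section NetApprox.
Variable sigma : R -> R.
Hypothesis sig01 : forall t, 0 <= sigma t <= 1.
Hypothesis sigc : forall t, continuous sigma t.
Variable x0 D : R.
Hypothesis HD : is_derive sigma x0 D.
Hypothesis HDnz : D <> 0.

Definition NR (phi : R -> R) (Rr : R) : Prop :=
  forall eps, 0 < eps -> exists l c0, forall s, Rabs s <= Rr -> Rabs (phi s - (c0 + nsum sigma l s)) <= eps.

Definition NN phi := forall Rr, NR phi Rr.

Lemma NR_ext phi psi Rr : (forall s, Rabs s <= Rr -> phi s = psi s) -> NR psi Rr -> NR phi Rr.
Proof. intros He H eps Hp. destruct (H eps Hp) as (l & c0 & Hl). exists l, c0. intros s Hs. rewrite He; auto. Qed.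

Lemma NR_lim phi Rr : (forall eps, 0 < eps -> exists psi, NR psi Rr /\ forall s, Rabs s <= Rr -> Rabs (phi s - psi s) <= eps) -> NR phi Rr.
Proof.
  intros H eps Hp. destruct (H (eps/2)) as (psi & Hpsi & Hc); [lra|].
  destruct (Hpsi (eps/2)) as (l & c0 & Hl); [lra|]. exists l, c0. intros s Hs.
  replace (phi s - (c0 + nsum sigma l s)) with ((phi s - psi s) + (psi s - (c0 + nsum sigma l s))) by ring.
  eapply Rle_trans. apply Rabs_triang. specialize (Hc s Hs). specialize (Hl s Hs). lra.
Qed.

Lemma nsum_app l1 l2 s : nsum sigma (l1 ++ l2) s = nsum sigma l1 s + nsum sigma l2 s.
Proof. induction l1 as [|[[c a] b] l IH]; simpl; [ring|]. rewrite IH; ring. Qed.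

Definition nscal (k : R) (l : list (R * R * R)) := map (fun '(c, a, b) => (k * c, a, b)) l.
Lemma nsum_scal k l s : nsum sigma (nscal k l) s = k * nsum sigma l s.
Proof. induction l as [|[[c a] b] l IH]; simpl; [ring|]. rewrite IH; ring. Qed.

Definition naff (al be : R) (l : list (R * R * R)) := map (fun '(c, a, b) => (c, a * al, a * be + b)) l.
Lemma nsum_aff al be l s : nsum sigma (naff al be l) s = nsum sigma l (al * s + be).
Proof. induction l as [|[[c a] b] l IH]; simpl; [ring|]. rewrite IH. f_equal. f_equal. f_equal. ring. Qed.

Lemma NR_plus f g Rr : NR f Rr -> NR g Rr -> NR (fun s => f s + g s) Rr.
Proof.
  intros Hf Hg eps Hp. destruct (Hf (eps/2)) as (l1 & c1 & H1); [lra|]. destruct (Hg (eps/2)) as (l2 & c2 & H2); [lra|].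
  exists (l1 ++ l2), (c1 + c2). intros s Hs. rewrite nsum_app.
  specialize (H1 s Hs); specialize (H2 s Hs).
  replace (f s + g s - (c1 + c2 + (nsum sigma l1 s + nsum sigma l2 s))) with
    ((f s - (c1 + nsum sigma l1 s)) + (g s - (c2 + nsum sigma l2 s))) by ring.
  eapply Rle_trans. apply Rabs_triang. lra.
Qed.

Lemma NR_scal k f Rr : NR f Rr -> NR (fun s => k * f s) Rr.
Proof.
  intros Hf eps Hp. destruct (Hf (eps / (Rabs k + 1))) as (l & c & H).
  { apply Rdiv_lt_0_compat; [lra|]. pose proof (Rabs_pos k); lra. }
  exists (nscal k l), (k * c). intros s Hs. rewrite nsum_scal.
  replace (k * f s - (k * c + k * nsum sigma l s)) with (k * (f s - (c + nsum sigma l s))) by ring.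
  rewrite Rabs_mult. specialize (H s Hs). pose proof (Rabs_pos k).
  apply Rle_trans with (Rabs k * (eps / (Rabs k + 1))). apply Rmult_le_compat_l; auto.
  apply Rle_trans with ((Rabs k + 1) * (eps / (Rabs k + 1))). apply Rmult_le_compat_r. left; apply Rdiv_lt_0_compat; lra. lra.
  right; field; lra.
Qed.

Lemma NR_minus f g Rr : NR f Rr -> NR g Rr -> NR (fun s => f s - g s) Rr.
Proof. intros Hf Hg. eapply NR_ext; [|apply (NR_plus _ _ _ Hf (NR_scal (-1) _ _ Hg))]. intros; simpl; ring. Qed.

Lemma NR_const c Rr : NR (fun _ => c) Rr.
Proof. intros eps Hp. exists nil, c. intros; simpl. replace (c - (c + 0)) with 0 by ring. rewrite Rabs_R0; lra. Qed.

Lemma NR_sig al be Rr : NR (fun s => sigma (al * s + be)) Rr.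
Proof. intros eps Hp. exists ((1, al, be) :: nil), 0. intros; simpl.
  replace (sigma (al * s + be) - (0 + (1 * sigma (al * s + be) + 0))) with 0 by ring. rewrite Rabs_R0; lra. Qed.

Lemma NR_mono f R1 R2 : R1 <= R2 -> NR f R2 -> NR f R1.
Proof. intros Hle H eps Hp. destruct (H eps Hp) as (l & c & Hl). exists l, c. intros s Hs. apply Hl; lra. Qed.

Lemma NR_aff f al be Rr : NR f (Rabs al * Rr + Rabs be) -> NR (fun s => f (al * s + be)) Rr.
Proof.
  intros H eps Hp. destruct (H eps Hp) as (l & c & Hl). exists (naff al be l), c. intros s Hs.
  rewrite nsum_aff. apply Hl. eapply Rle_trans. apply Rabs_triang. rewrite Rabs_mult.
  pose proof (Rabs_pos al). apply Rplus_le_compat_r. apply Rmult_le_compat_l; auto.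
Qed.

Lemma NN_aff f al be : NN f -> NN (fun s => f (al * s + be)).
Proof. intros H Rr. apply NR_aff. apply H. Qed.

Lemma NR_rsum (f : nat -> R -> R) m n Rr : (forall i, NR (f i) Rr) -> NR (fun s => rsum (fun i => f i s) m n) Rr.
Proof.
  intros H. revert m. induction n; intros m; simpl. apply NR_const.
  apply NR_plus; auto.
Qed.

Lemma NR_id Rr : 0 <= Rr -> NR (fun s => s) Rr.
Proof.
  intros HR eps Hp. destruct (neuron_est sigma sigc x0 D HD HDnz Rr eps HR Hp) as (dl & mu & Hdl & Hmu & Hn).
  exists ((/ (dl * D), dl, x0) :: nil), (- sigma x0 / (dl * D)). intros s Hs.
  destruct (Hn s s Hs) as [_ H2]. rewrite Rminus_diag, Rabs_R0; lra.
  simpl. replace (s - (- sigma x0 / (dl * D) + (/ (dl * D) * sigma (dl * s + x0) + 0))) with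
    (- ((sigma (x0 + dl * s) - sigma x0) / (dl * D) - s)).
  rewrite Rabs_Ropp; auto.
  replace (dl * s + x0) with (x0 + dl * s) by ring. field. split; lra.
Qed.

Lemma NN_id : NN (fun s => s).
Proof. intros Rr eps Hp. destruct (Rle_dec 0 Rr). apply NR_id; auto.
  exists nil, 0. intros s Hs. pose proof (Rabs_pos s). lra. Qed.

End NetApprox.

Definition Dh (h : R) (g : R -> R) : R -> R := fun y => g (y + h) - g y.
Fixpoint Dn (h : R) (n : nat) (g : R -> R) : R -> R :=
  match n with O => g | S n' => Dh h (Dn h n' g) end.
Definition Jop (g : R -> R) : R -> R := fun x => RInt g 0 x.
Fixpoint Jn (n : nat) (g : R -> R) : R -> R :=
  match n with O => g | S n' => Jop (Jn n' g) end.
Definition Avg (h : R) (g : R -> R) : R -> R := Dh h (Jop g).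
Fixpoint Avgn (h : R) (n : nat) (g : R -> R) : R -> R :=
  match n with O => g | S n' => Avg h (Avgn h n' g) end.

Definition CC (g : R -> R) := forall x, continuous g x.

Lemma CC_exRInt g : CC g -> forall a b, ex_RInt g a b.
Proof. intros H a b. apply (@ex_RInt_continuous R_CompleteNormedModule). intros; apply H. Qed.

Lemma CC_Jop g : CC g -> CC (Jop g).
Proof.
  intros H x. apply (@ex_derive_continuous R_AbsRing R_NormedModule). exists (g x).
  apply (@is_derive_RInt R_CompleteNormedModule g (Jop g) 0 x).
  - apply filter_forall. intros y. unfold Jop. apply RInt_correct. apply CC_exRInt; auto.
  - apply H.
Qed.

Lemma CC_Dh h g : CC g -> CC (Dh h g).
Proof.
  intros H x. unfold Dh. apply (continuous_minus (fun y => g (y + h)) g).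
  - apply (continuous_comp (fun y => y + h) g). apply (continuous_plus (fun y => y) (fun _ => h)).
    apply continuous_id. apply continuous_const. apply H.
  - apply H.
Qed.

Lemma CC_Dn h n g : CC g -> CC (Dn h n g).
Proof. intros H; induction n; simpl; auto. apply CC_Dh; auto. Qed.
Lemma CC_Jn n g : CC g -> CC (Jn n g).
Proof. intros H; induction n; simpl; auto. apply CC_Jop; auto. Qed.
Lemma CC_Avg h g : CC g -> CC (Avg h g).
Proof. intros H. apply CC_Dh, CC_Jop, H. Qed.
Lemma CC_Avgn h n g : CC g -> CC (Avgn h n g).
Proof. intros H; induction n; simpl; auto. apply CC_Avg; auto. Qed.

Lemma RInt_shift g h a b : CC g -> RInt (fun t => g (t + h)) a b = RInt g (a + h) (b + h).
Proof.
  intros H.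
  assert (E : RInt (fun y => scal 1 (g (1 * y + h))) a b = RInt g (1 * a + h) (1 * b + h)).
  { apply (@RInt_comp_lin R_CompleteNormedModule). rewrite !Rmult_1_l. apply CC_exRInt; auto. }
  rewrite !Rmult_1_l in E. rewrite <- E. apply RInt_ext. intros x _.
  unfold scal; simpl; unfold mult; simpl. replace (1 * x + h) with (x + h) by ring. ring.
Qed.

Lemma RInt_chasles_R g a b c : CC g -> RInt g a b + RInt g b c = RInt g a c.
Proof. intros H. apply (RInt_Chasles g a b c); apply CC_exRInt; auto. Qed.

Lemma RInt_minus_R f g a b : CC f -> CC g -> RInt (fun x => f x - g x) a b = RInt f a b - RInt g a b.
Proof. intros Hf Hg. apply (RInt_minus f g a b); apply CC_exRInt; auto. Qed.

Lemma Jop_Dh u h : CC u -> forall x, Jop (Dh h u) x = Dh h (Jop u) x - Jop u h.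
Proof.
  intros H x. unfold Jop, Dh. rewrite RInt_minus_R; auto.
  2:{ intros y. apply (continuous_comp (fun y => y + h) u). apply (continuous_plus (fun y => y) (fun _ => h)).
      apply continuous_id. apply continuous_const. apply H. }
  rewrite RInt_shift by auto. rewrite Rplus_0_l.
  rewrite <- (RInt_chasles_R u 0 h (x + h)) by auto. ring.
Qed.

Lemma Dh_ext h f g c : (forall x, f x = g x - c) -> forall y, Dh h f y = Dh h g y.
Proof. intros H y. unfold Dh. rewrite !H. ring. Qed.

Lemma Jop_Dn u h n : CC u -> exists c, forall x, Jop (Dn h n u) x = Dn h n (Jop u) x - c.
Proof.
  intros H. induction n.
  - exists 0. intros; simpl; ring.
  - destruct IHn as [c Hc]. exists (Jop (Dn h n u) h). intros x. simpl.
    rewrite Jop_Dh by (apply CC_Dn; auto). f_equal. apply (Dh_ext h _ _ c). auto.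
Qed.

Lemma Avgn_eq h n u : CC u -> Avgn h n u = Dn h n (Jn n u).
Proof.
  intros H. induction n; simpl; auto. rewrite IHn. extensionality x. unfold Avg.
  destruct (Jop_Dn (Jn n u) h n (CC_Jn n u H)) as [c Hc].
  apply (Dh_ext h _ _ c). auto.
Qed.

Lemma Dh_comm a b g : Dh a (Dh b g) = Dh b (Dh a g).
Proof. extensionality y. unfold Dh. replace (y + a + b) with (y + b + a) by ring. ring. Qed.

Lemma Dn_Dh_comm a b n g : Dn a n (Dh b g) = Dh b (Dn a n g).
Proof. induction n; simpl; auto. rewrite IHn. apply Dh_comm. Qed.

Lemma Dn_comm a b n m g : Dn a n (Dn b m g) = Dn b m (Dn a n g).
Proof. induction m; simpl; auto. rewrite Dn_Dh_comm. rewrite IHm. auto. Qed.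

Lemma Dn_S_inner h n g : Dn h (S n) g = Dn h n (Dh h g).
Proof. simpl. rewrite Dn_Dh_comm. auto. Qed.

Lemma Dn_minus h n f g y : Dn h n (fun t => f t - g t) y = Dn h n f y - Dn h n g y.
Proof. revert y. induction n; intros y; simpl; auto. unfold Dh. rewrite !IHn. ring. Qed.

Lemma Dn_scal h n k f y : Dn h n (fun t => k * f t) y = k * Dn h n f y.
Proof. revert y. induction n; intros y; simpl; auto. unfold Dh. rewrite !IHn. ring. Qed.

Lemma Dn_bound h n g B y : 0 <= h -> (forall t, y <= t <= y + INR n * h -> Rabs (g t) <= B) ->
  Rabs (Dn h n g y) <= 2 ^ n * B.
Proof.
  revert y. induction n; intros y Hh H; simpl.
  - rewrite Rmult_1_l. apply H. simpl. lra.
  - unfold Dh. eapply Rle_trans. apply Rabs_triang. rewrite Rabs_Ropp.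
    rewrite S_INR in H.
    assert (H1 : Rabs (Dn h n g (y + h)) <= 2 ^ n * B).
    { apply IHn; auto. intros t Ht. apply H. pose proof (pos_INR n). nra. }
    assert (H2 : Rabs (Dn h n g y) <= 2 ^ n * B).
    { apply IHn; auto. intros t Ht. apply H. pose proof (pos_INR n). nra. }
    lra.
Qed.

Lemma Avg_eq h g y : CC g -> Avg h g y = RInt g y (y + h).
Proof. intros H. unfold Avg, Dh, Jop. rewrite <- (RInt_chasles_R g 0 y (y + h)) by auto. ring. Qed.

Lemma RInt_bounds g a b m M : CC g -> a <= b -> (forall t, a <= t <= b -> m <= g t <= M) ->
  (b - a) * m <= RInt g a b <= (b - a) * M.
Proof.
  intros Hc Hab H.
  assert (Ec : forall c, RInt (fun _ => c) a b = (b - a) * c).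
  { intros c. rewrite RInt_const. unfold scal; simpl; unfold mult; simpl. ring. }
  split.
  - rewrite <- Ec. apply RInt_le; auto. apply ex_RInt_const. apply CC_exRInt; auto.
    intros x Hx. apply H; lra.
  - rewrite <- Ec. apply RInt_le; auto. apply CC_exRInt; auto. apply ex_RInt_const.
    intros x Hx. apply H; lra.
Qed.

Lemma Avgn_bound dl n u y m M : CC u -> 0 < dl ->
  (forall t, y <= t <= y + INR n * dl -> m <= u t <= M) ->
  dl ^ n * m <= Avgn dl n u y <= dl ^ n * M.
Proof.
  revert y. induction n; intros y Hc Hdl H; simpl.
  - rewrite !Rmult_1_l. apply H. simpl; lra.
  - rewrite Avg_eq by (apply CC_Avgn; auto).
    assert (HB := RInt_bounds (Avgn dl n u) y (y + dl) (dl ^ n * m) (dl ^ n * M) (CC_Avgn dl n u Hc) ltac:(lra)).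
    replace (y + dl - y) with dl in HB by ring. rewrite !Rmult_assoc. apply HB.
    intros t Ht. apply IHn; auto. intros t' Ht'. apply H. rewrite S_INR. pose proof (pos_INR n). nra.
Qed.

Lemma riemann u eta N y w : CC u -> 0 <= eta ->
  (forall j, (j < N)%nat -> forall t, y + INR j * eta <= t <= y + INR j * eta + eta -> Rabs (u t - u (y + INR j * eta)) <= w) ->
  Rabs (RInt u y (y + INR N * eta) - eta * rsum (fun j => u (y + INR j * eta)) 0 N) <= INR N * eta * w.
Proof.
  intros Hc He. induction N; intros H.
  - simpl. rewrite Rmult_0_l, Rplus_0_r. replace (RInt u y y) with 0 by (rewrite RInt_point; reflexivity).
    replace (0 - eta * 0) with 0 by ring. rewrite Rabs_R0. lra.
  - rewrite rsum_last. simpl (0 + N)%nat.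
    rewrite <- (RInt_chasles_R u y (y + INR N * eta) (y + INR (S N) * eta)) by auto.
    assert (IH := IHN ltac:(intros j Hj; apply H; lia)).
    assert (Hp : Rabs (RInt u (y + INR N * eta) (y + INR (S N) * eta) - eta * u (y + INR N * eta)) <= eta * w).
    { replace (eta * u (y + INR N * eta)) with (RInt (fun _ => u (y + INR N * eta)) (y + INR N * eta) (y + INR (S N) * eta)).
      2:{ rewrite RInt_const. rewrite S_INR. unfold scal; simpl; unfold mult; simpl. ring. }
      rewrite <- RInt_minus_R; auto. 2:{ intros z; apply continuous_const. }
      eapply Rle_trans. apply (abs_RInt_le_const _ _ _ w). rewrite S_INR; lra.
      apply CC_exRInt. intros z. apply (continuous_minus u (fun _ => u (y + INR N * eta))). apply Hc. apply continuous_const.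
      intros t Ht. apply H. lia. rewrite S_INR in Ht. lra.
      right. rewrite S_INR. ring. }
    replace (RInt u y (y + INR N * eta) + RInt u (y + INR N * eta) (y + INR (S N) * eta) -
      eta * (rsum (fun j => u (y + INR j * eta)) 0 N + u (y + INR N * eta))) with
      ((RInt u y (y + INR N * eta) - eta * rsum (fun j => u (y + INR j * eta)) 0 N) +
       (RInt u (y + INR N * eta) (y + INR (S N) * eta) - eta * u (y + INR N * eta))) by ring.
    eapply Rle_trans. apply Rabs_triang. apply Rle_trans with (INR N * eta * w + eta * w). lra. rewrite S_INR; lra.
Qed.

Section Powers.
Variable sigma : R -> R.
Hypothesis sig01 : forall t, 0 <= sigma t <= 1.
Hypothesis sigc : forall t, continuous sigma t.
Variable x0 D : R.
Hypothesis HD : is_derive sigma x0 D.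
Hypothesis HDnz : D <> 0.

Notation NR := (NR sigma).
Notation NN := (NN sigma).

Lemma NN_Avg h u : 0 < h -> CC u -> NN u -> NN (Avg h u).
Proof.
  intros Hh Hc HN Rr. apply NR_mono with (Rabs Rr). apply Rle_abs.
  set (Q := Rabs Rr). assert (HQ : 0 <= Q) by apply Rabs_pos.
  apply NR_lim. intros eps He.
  destruct (unif_cont u Hc (- Q - 1) (Q + h + 1) (eps / (2 * h))) as [mu [Hmu Hu]].
  { apply Rdiv_lt_0_compat; lra. }
  destruct (INR_archimed mu h Hmu) as [N HN'].
  assert (HN0 : (0 < N)%nat). { destruct N; [simpl in HN'; lra|lia]. }
  assert (HNr : 0 < INR N) by (apply lt_0_INR; lia).
  set (eta := h / INR N).
  assert (Heta : 0 < eta) by (apply Rdiv_lt_0_compat; lra).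
  assert (Hetamu : eta <= mu).
  { unfold eta. apply Rle_div_l; auto. lra. }
  exists (fun s => eta * rsum (fun j => u (1 * s + INR j * eta)) 0 N). split.
  - apply NR_scal. apply NR_rsum. intros j. apply NR_aff. apply HN.
  - intros s Hs. rewrite Avg_eq by auto.
    replace (s + h) with (s + INR N * eta) by (unfold eta; field; lra).
    rewrite (rsum_ext _ (fun j => u (s + INR j * eta))) by (intros; f_equal; ring).
    eapply Rle_trans. apply riemann; auto. lra.
    + intros j Hj t Ht. apply Hu.
      * apply Rabs_le_inv in Hs. assert (INR j * eta + eta <= INR N * eta).
        { replace (INR j * eta + eta) with (INR (S j) * eta) by (rewrite S_INR; ring).
          apply Rmult_le_compat_r; [lra|]. apply le_INR; lia. }
        assert (0 <= INR j * eta) by (apply Rmult_le_pos; [apply pos_INR|lra]).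
        replace (INR N * eta) with h in H by (unfold eta; field; lra). split; lra.
      * apply Rabs_le_inv in Hs. assert (INR j * eta + eta <= INR N * eta).
        { replace (INR j * eta + eta) with (INR (S j) * eta) by (rewrite S_INR; ring).
          apply Rmult_le_compat_r; [lra|]. apply le_INR; lia. }
        assert (0 <= INR j * eta) by (apply Rmult_le_pos; [apply pos_INR|lra]).
        replace (INR N * eta) with h in H by (unfold eta; field; lra). split; lra.
      * rewrite Rabs_right by lra. lra.
    + replace (INR N * eta) with h by (unfold eta; field; lra).
      apply Rle_trans with (eps / 2). right; field; lra. lra.
Qed.

Lemma NN_sig : NN sigma.
Proof. intros Rr. eapply NR_ext; [|apply (NR_sig sigma 1 0)]. intros; simpl; f_equal; ring. Qed.

Lemma CC_sig : CC sigma.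
Proof. intros x; apply sigc. Qed.

Lemma NN_Avgn h n : 0 < h -> NN (Avgn h n sigma).
Proof. intros Hh. induction n; simpl. apply NN_sig. apply NN_Avg; auto. apply CC_Avgn, CC_sig. Qed.

Lemma NN_Dn_param n : forall G, CC G -> NN G -> forall a c b, NN (fun s => Dn (a * s) n G (c * s + b)).
Proof.
  induction n; intros G Hc HN a c b; simpl.
  - apply NN_aff; auto.
  - intros Rr. unfold Dh. apply NR_minus.
    + eapply NR_ext; [|apply (IHn G Hc HN a (c + a) b)]. intros s _. simpl. f_equal. ring.
    + apply (IHn G Hc HN a c b).
Qed.

Lemma diff_const h n : forall g B, (forall y, Rabs (g y) <= B) ->
  (forall m : nat, Dn h n g (x0 + INR m * h) = 0) -> forall m : nat, g (x0 + INR m * h) = g x0.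
Proof.
  induction n; intros g B HB Hz m.
  - simpl in Hz. rewrite Hz. specialize (Hz 0%nat). simpl in Hz. rewrite Rmult_0_l, Rplus_0_r in Hz. auto.
  - assert (Hc := IHn (Dh h g) (2 * B)).
    assert (HB2 : forall y, Rabs (Dh h g y) <= 2 * B).
    { intros y. unfold Dh. eapply Rle_trans. apply Rabs_triang. rewrite Rabs_Ropp. pose proof (HB (y + h)). pose proof (HB y). lra. }
    specialize (Hc HB2). assert (Hz' : forall m : nat, Dn h n (Dh h g) (x0 + INR m * h) = 0).
    { intros m'. rewrite <- Dn_S_inner. auto. }
    specialize (Hc Hz').
    set (c := Dh h g x0) in *.
    assert (Hlin : forall m : nat, g (x0 + INR m * h) = g x0 + INR m * c).
    { induction m0.
      - simpl. rewrite Rmult_0_l, Rplus_0_r. ring.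
      - specialize (Hc m0). unfold Dh in Hc.
        replace (x0 + INR (S m0) * h) with (x0 + INR m0 * h + h) by (rewrite S_INR; ring).
        assert (E : g (x0 + INR m0 * h + h) = g (x0 + INR m0 * h) + c) by lra.
        rewrite E, IHm0, S_INR. ring. }
    destruct (Req_dec c 0) as [Hc0|Hc0].
    + rewrite Hlin, Hc0. ring.
    + exfalso. destruct (INR_archimed (Rabs c) (2 * Rabs B + 1)) as [N HN].
      { apply Rabs_pos_lt; auto. }
      assert (H1 := HB (x0 + INR N * h)). assert (H2 := HB x0).
      rewrite Hlin in H1.
      assert (Rabs (INR N * c) <= 2 * Rabs B).
      { replace (INR N * c) with ((g x0 + INR N * c) - g x0) by ring. eapply Rle_trans. apply Rabs_triang.
        rewrite Rabs_Ropp. pose proof (Rle_abs B). lra. }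
      rewrite Rabs_mult, Rabs_right in H by (apply Rle_ge, pos_INR). lra.
Qed.

Lemma exists_nonzero_diff : exists h, 0 < h /\ forall n, exists b, Dn h n sigma b <> 0.
Proof.
  assert (HaD : 0 < Rabs D) by (apply Rabs_pos_lt; auto).
  destruct (deriv_est sigma x0 D HD (Rabs D / 2)) as [rho [Hrho Hr]]. lra.
  exists rho. split; auto. intros n.
  destruct (Classical_Prop.classic (exists m : nat, Dn rho n sigma (x0 + INR m * rho) <> 0)) as [[m Hm]|Hno].
  - eauto.
  - exfalso.
    assert (Hz : forall m : nat, Dn rho n sigma (x0 + INR m * rho) = 0).
    { intros m. destruct (Req_dec (Dn rho n sigma (x0 + INR m * rho)) 0); auto. exfalso; apply Hno; eauto. }
    assert (HB : forall y, Rabs (sigma y) <= 1). { intros y. specialize (sig01 y). rewrite Rabs_right; lra. }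
    assert (E := diff_const rho n sigma 1 HB Hz 1%nat). simpl in E. rewrite Rmult_1_l in E.
    assert (Hre : Rabs rho <= rho) by (rewrite Rabs_right; lra).
    specialize (Hr rho Hre). rewrite E in Hr.
    replace (sigma x0 - sigma x0 - D * rho) with (- (D * rho)) in Hr by ring.
    rewrite Rabs_Ropp, Rabs_mult, (Rabs_right rho) in Hr by lra. nra.
Qed.

End Powers.

Section Powers2.
Variable sigma : R -> R.
Hypothesis sig01 : forall t, 0 <= sigma t <= 1.
Hypothesis sigc : forall t, continuous sigma t.
Variable x0 D : R.
Hypothesis HD : is_derive sigma x0 D.
Hypothesis HDnz : D <> 0.

Notation NR := (NR sigma).
Notation NN := (NN sigma).

Lemma main_est h n b dl w : 0 < h -> 0 < dl ->
  (forall t t', b <= t <= b + INR n * h -> t <= t' <= t + INR n * dl -> Rabs (sigma t' - sigma t) <= w) ->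
  Rabs (Dn dl n (Avgn h n sigma) b - dl ^ n * Dn h n sigma b) <= 2 ^ n * (dl ^ n * w).
Proof.
  intros Hh Hdl Hw.
  assert (Hc : CC sigma) by (intros x; apply sigc).
  rewrite (Avgn_eq h n sigma Hc). rewrite Dn_comm. rewrite <- (Avgn_eq dl n sigma Hc).
  rewrite <- Dn_scal, <- Dn_minus. apply Dn_bound. lra.
  intros t Ht.
  assert (Hb := Avgn_bound dl n sigma t (sigma t - w) (sigma t + w) Hc Hdl).
  assert (Hb' : dl ^ n * (sigma t - w) <= Avgn dl n sigma t <= dl ^ n * (sigma t + w)).
  { apply Hb. intros t' Ht'. specialize (Hw t t' Ht Ht'). apply Rabs_le_inv in Hw. lra. }
  apply Rabs_le. lra.
Qed.

Lemma pow_pos_interval n al be : 0 < al -> al <= be -> forall eps, 0 < eps ->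
  exists l c0, forall s, al <= s <= be -> Rabs (s ^ n - (c0 + nsum sigma l s)) <= eps.
Proof.
  intros Hal Hab eps He.
  destruct (exists_nonzero_diff sigma sig01 x0 D HD HDnz) as [h [Hh Hex]].
  destruct (Hex n) as [b Hb].
  set (cn := Dn h n sigma b) in *.
  assert (Hcn : 0 < Rabs cn) by (apply Rabs_pos_lt; auto).
  assert (H2b : 0 < (2 * be) ^ n) by (apply pow_lt; lra).
  set (w := eps * Rabs cn / (2 * (2 * be) ^ n)).
  assert (Hw : 0 < w) by (unfold w; apply Rdiv_lt_0_compat; [apply Rmult_lt_0_compat|]; lra).
  destruct (unif_cont sigma sigc b (b + INR n * h + INR n + 1) w Hw) as [mu [Hmu Hu]].
  set (m1 := Rmin 1 (mu / (INR n + 1))).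
  assert (Hnp : 0 <= INR n) by apply pos_INR.
  assert (Hm1 : 0 < m1 <= 1) by (unfold m1; split; [apply Rmin_glb_lt; [lra|apply Rdiv_lt_0_compat; lra]|apply Rmin_l]).
  assert (Hm1mu : INR n * m1 <= mu).
  { apply Rle_trans with (INR n * (mu / (INR n + 1))).
    apply Rmult_le_compat_l; auto. apply Rmin_r.
    apply Rle_trans with ((INR n + 1) * (mu / (INR n + 1))).
    apply Rmult_le_compat_r. left; apply Rdiv_lt_0_compat; lra. lra. right; field; lra. }
  set (tau := m1 / be).
  assert (Htau : 0 < tau) by (unfold tau; apply Rdiv_lt_0_compat; lra).
  assert (Htaun : 0 < tau ^ n) by (apply pow_lt; auto).
  set (G := Avgn h n sigma).
  assert (HCG : CC G) by (apply CC_Avgn; intros x; apply sigc).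
  assert (HNG : NN G) by (apply NN_Avgn; auto).
  assert (HNpsi : NR (fun s => / (tau ^ n * cn) * Dn (tau * s) n G (0 * s + b)) be).
  { apply NR_scal. apply (NN_Dn_param sigma n G HCG HNG tau 0 b). }
  destruct (HNpsi (eps / 2)) as (l & c0 & Hl). lra.
  exists l, c0. intros s Hs.
  assert (Hsb : Rabs s <= be) by (rewrite Rabs_right; lra).
  specialize (Hl s Hsb).
  replace (0 * s + b) with b in Hl by ring.
  assert (Hdl : 0 < tau * s) by (apply Rmult_lt_0_compat; lra).
  assert (Hdl1 : tau * s <= m1).
  { unfold tau. apply Rle_trans with (m1 / be * be). apply Rmult_le_compat_l; [left; apply Rdiv_lt_0_compat; lra|lra]. right; field; lra. }
  assert (Hest := main_est h n b (tau * s) w Hh Hdl).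
  assert (Hest' : Rabs (Dn (tau * s) n G b - (tau * s) ^ n * cn) <= 2 ^ n * ((tau * s) ^ n * w)).
  { apply Hest. intros t t' Ht Ht'. apply Rabs_le_inv in Hsb.
    assert (INR n * (tau * s) <= INR n * m1) by (apply Rmult_le_compat_l; lra).
    apply Hu; try lra.
    - split; try lra. assert (INR n * m1 <= INR n) by nra. lra.
    - rewrite Rabs_right; lra. }
  rewrite Rpow_mult_distr in Hest'.
  assert (Hsn : 0 < s ^ n) by (apply pow_lt; lra).
  assert (Hsbn : s ^ n <= be ^ n) by (apply pow_incr; lra).
  assert (Hmain : Rabs (s ^ n - / (tau ^ n * cn) * Dn (tau * s) n G b) <= eps / 2).
  { replace (s ^ n - / (tau ^ n * cn) * Dn (tau * s) n G b) with
      (- (Dn (tau * s) n G b - tau ^ n * s ^ n * cn) / (tau ^ n * cn)) by (field; split; lra).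
    rewrite Rabs_div by (apply Rmult_integral_contrapositive; split; lra).
    rewrite Rabs_Ropp, Rabs_mult, (Rabs_right (tau ^ n)) by lra.
    apply Rle_div_l. apply Rmult_lt_0_compat; lra.
    eapply Rle_trans. apply Hest'.
    assert (E2 : (2 * be) ^ n = 2 ^ n * be ^ n) by apply Rpow_mult_distr.
    assert (H2n : 0 < 2 ^ n) by (apply pow_lt; lra).
    apply Rle_trans with (2 ^ n * (tau ^ n * be ^ n * w)).
    { apply Rmult_le_compat_l; [lra|]. apply Rmult_le_compat_r; [lra|]. apply Rmult_le_compat_l; lra. }
    right. unfold w. rewrite E2. field. split; lra. }
  replace (s ^ n - (c0 + nsum sigma l s)) with
    ((s ^ n - / (tau ^ n * cn) * Dn (tau * s) n G b) + (/ (tau ^ n * cn) * Dn (tau * s) n G b - (c0 + nsum sigma l s))) by ring.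
  eapply Rle_trans. apply Rabs_triang. lra.
Qed.

Lemma NR_sum_f (f : nat -> R -> R) N Rr : (forall i, NR (f i) Rr) -> NR (fun s => sum_f_R0 (fun i => f i s) N) Rr.
Proof. intros H. induction N; simpl. apply H. apply NR_plus; auto. Qed.

Lemma NR_shift_pow i Q c : 0 <= Q -> c = Q + 1 -> NR (fun s => (s + c) ^ i) Q.
Proof.
  intros HQ Hc eps He.
  destruct (pow_pos_interval i 1 (2 * Q + 1) ltac:(lra) ltac:(lra) eps He) as (l & c0 & Hl).
  exists (naff 1 c l), c0. intros s Hs. rewrite nsum_aff.
  replace (1 * s + c) with (s + c) by ring. apply Hl. apply Rabs_le_inv in Hs. lra.
Qed.

Lemma NN_pow n : NN (fun s => s ^ n).
Proof.
  intros Rr. apply NR_mono with (Rabs Rr). apply Rle_abs.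
  set (Q := Rabs Rr). assert (HQ : 0 <= Q) by apply Rabs_pos.
  eapply NR_ext.
  2:{ apply (NR_sum_f (fun i s => Binomial.C n i * (s + (Q + 1)) ^ i * (- (Q + 1)) ^ (n - i)) n Q).
      intros i. eapply NR_ext; [|apply (NR_scal sigma (Binomial.C n i * (- (Q + 1)) ^ (n - i)) _ _ (NR_shift_pow i Q (Q + 1) HQ eq_refl))].
      intros; simpl; ring. }
  intros s _. simpl. replace s with ((s + (Q + 1)) + - (Q + 1)) at 1 by ring. apply binomial.
Qed.

End Powers2.

Fixpoint peval (l : list (R * nat)) (s : R) : R :=
  match l with nil => 0 | (c, k) :: l' => c * s ^ k + peval l' s end.

Definition pmul (l1 l2 : list (R * nat)) : list (R * nat) :=
  flat_map (fun '(c, k) => map (fun '(c', k') => (c * c', (k + k')%nat)) l2) l1.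

Lemma peval_app l1 l2 s : peval (l1 ++ l2) s = peval l1 s + peval l2 s.
Proof. induction l1 as [|[c k] l IH]; simpl; [ring|]. rewrite IH; ring. Qed.

Lemma peval_map c k l2 s : peval (map (fun '(c', k') => (c * c', (k + k')%nat)) l2) s = c * s ^ k * peval l2 s.
Proof. induction l2 as [|[c' k'] l IH]; simpl; [ring|]. rewrite IH, pow_add; ring. Qed.

Lemma peval_mul l1 l2 s : peval (pmul l1 l2) s = peval l1 s * peval l2 s.
Proof.
  induction l1 as [|[c k] l IH]; simpl; [ring|]. unfold pmul in *. simpl.
  rewrite peval_app, peval_map, IH. ring.
Qed.

Definition tent (u : R) : R := (Rabs (u + 1) - 2 * Rabs u + Rabs (u - 1)) / 2.

Lemma tent_out u : 1 <= Rabs u -> tent u = 0.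
Proof. unfold tent, Rabs. destruct (Rcase_abs u); destruct (Rcase_abs (u + 1)); destruct (Rcase_abs (u - 1)); intros; lra. Qed.

Lemma tent_in u : Rabs u <= 1 -> tent u = 1 - Rabs u.
Proof. unfold tent, Rabs. destruct (Rcase_abs u); destruct (Rcase_abs (u + 1)); destruct (Rcase_abs (u - 1)); intros; lra. Qed.

Lemma tent_range u : 0 <= tent u <= 1.
Proof. unfold tent, Rabs. destruct (Rcase_abs u); destruct (Rcase_abs (u + 1)); destruct (Rcase_abs (u - 1)); lra. Qed.

Lemma tent_pos_close u : 0 < tent u -> Rabs u < 1.
Proof. intros H. destruct (Rlt_le_dec (Rabs u) 1); auto. rewrite tent_out in H; lra. Qed.

Lemma CC_tent : CC tent.
Proof.
  intros x. apply continuity_pt_filterlim. unfold tent.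
  apply continuity_pt_div. 3: apply Rgt_not_eq; apply Rlt_gt; apply Rlt_0_2.
  2: apply continuity_pt_const; intros a b; auto.
  apply continuity_pt_plus. apply continuity_pt_minus.
  apply continuity_pt_comp with (f1 := fun u => u + 1). apply continuity_pt_plus. apply derivable_continuous_pt; apply derivable_pt_id. apply continuity_pt_const; intros a b; auto. apply Rcontinuity_abs.
  apply continuity_pt_scal. apply Rcontinuity_abs.
  apply continuity_pt_comp with (f1 := fun u => u - 1). apply continuity_pt_minus. apply derivable_continuous_pt; apply derivable_pt_id. apply continuity_pt_const; intros a b; auto. apply Rcontinuity_abs.
Qed.

Lemma partition N u : 0 <= u <= INR N -> rsum (fun j => tent (u - INR j)) 0 (S N) = 1.
Proof.
  revert u. induction N; intros u Hu.
  - simpl in *. assert (u = 0) by lra. subst. rewrite tent_in; rewrite Rminus_0_r, Rabs_R0; lra.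
  - rewrite rsum_last. simpl (0 + S N)%nat. rewrite S_INR in Hu.
    destruct (Rle_dec u (INR N)) as [Hle|Hgt].
    + rewrite IHN by lra. rewrite tent_out. ring. rewrite S_INR. rewrite Rabs_left1 by lra. lra.
    + rewrite rsum_last. simpl (0 + N)%nat.
      rewrite (rsum_ext _ (fun _ => 0)).
      2:{ intros j Hj. apply tent_out. assert (INR j + 1 <= INR N).
          { rewrite <- S_INR. apply le_INR; lia. }
          rewrite Rabs_right; lra. }
      rewrite rsum_zero. rewrite S_INR.
      rewrite (tent_in (u - INR N)) by (rewrite Rabs_right; lra).
      rewrite (tent_in (u - (INR N + 1))) by (rewrite Rabs_left1; lra).
      rewrite Rabs_right by lra. rewrite Rabs_left1 by lra. ring.
Qed.

Lemma partition_bound N u (a : R) (f : nat -> R) w : 0 <= u <= INR N ->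
  (forall j, (j <= N)%nat -> Rabs (u - INR j) < 1 -> Rabs (a - f j) <= w) ->
  Rabs (a - rsum (fun j => tent (u - INR j) * f j) 0 (S N)) <= w.
Proof.
  intros Hu H.
  replace a with (a * rsum (fun j => tent (u - INR j)) 0 (S N)) at 1 by (rewrite partition; auto; ring).
  rewrite <- rsum_scal, <- rsum_minus. eapply Rle_trans. apply rsum_abs.
  apply Rle_trans with (rsum (fun j => tent (u - INR j) * w) 0 (S N)).
  - apply rsum_le. intros j Hj.
    replace (a * tent (u - INR j) - tent (u - INR j) * f j) with (tent (u - INR j) * (a - f j)) by ring.
    rewrite Rabs_mult. rewrite (Rabs_right (tent _)) by (apply Rle_ge, tent_range).
    destruct (tent_range (u - INR j)) as [Ht0 Ht1].
    destruct Ht0 as [Ht0|Ht0].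
    + apply Rmult_le_compat_l; [lra|]. apply H. lia. apply tent_pos_close; auto.
    + rewrite <- Ht0. lra.
  - rewrite (rsum_ext _ (fun j => w * tent (u - INR j))) by (intros; ring).
    rewrite rsum_scal, partition; auto. lra.
Qed.

Fixpoint Qf (n : nat) (s : R) : R :=
  match n with O => 0 | S n' => Qf n' s + (s ^ 2 - Qf n' s ^ 2) / 2 end.

Lemma Qf_poly n : exists l, forall s, Qf n s = peval l s.
Proof.
  induction n as [|n [l Hl]]. exists nil; intros; simpl; auto.
  exists (l ++ ((1/2, 2%nat) :: nil) ++ pmul ((-1/2, 0%nat) :: nil) (pmul l l)).
  intros s. change (Qf (S n) s) with (Qf n s + (s ^ 2 - Qf n s ^ 2) / 2).
  rewrite !peval_app, !peval_mul, Hl. simpl. field.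
Qed.

Lemma Qf_inv n s : Rabs s <= 1 -> 0 <= Qf n s <= Rabs s /\ Rabs s - Qf n s <= Rabs s * (1 - Rabs s / 2) ^ n.
Proof.
  intros Hs. assert (E2 : s ^ 2 = Rabs s * Rabs s).
  { rewrite <- Rabs_mult. simpl. rewrite Rmult_1_r. symmetry. apply Rabs_right.
    apply Rle_ge, Rle_0_sqr. }
  assert (Ha := Rabs_pos s).
  induction n.
  - simpl. lra.
  - destruct IHn as [[H0 H1] H2]. change (Qf (S n) s) with (Qf n s + (s ^ 2 - Qf n s ^ 2) / 2). rewrite E2. set (q := Qf n s) in *. set (a := Rabs s) in *.
    assert (Hp : 0 <= (1 - a / 2) ^ n) by (apply pow_le; lra).
    split. split.
    + simpl. assert (0 <= a * a - q * (q * 1)) by nra. lra.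
    + simpl. nra.
    + simpl. replace (a - (q + (a * a - q * (q * 1)) / 2)) with ((a - q) * (1 - (a + q) / 2)) by field.
      assert (0 <= 1 - (a + q) / 2) by lra.
      apply Rle_trans with ((a * (1 - a / 2) ^ n) * (1 - a / 2)).
      * apply Rmult_le_compat; try lra. 
      * right. ring.
Qed.

Lemma Qf_conv eps : 0 < eps -> exists n, forall s, Rabs s <= 1 -> Rabs (Rabs s - Qf n s) <= eps.
Proof.
  intros He. set (e := Rmin eps 1).
  assert (He1 : 0 < e <= 1) by (unfold e; split; [apply Rmin_glb_lt; lra| apply Rmin_r]).
  assert (Hee : e <= eps) by apply Rmin_l.
  destruct (pow_lt_1_zero (1 - e / 2) ltac:(rewrite Rabs_right; lra) e ltac:(lra)) as [N HN].
  exists N. intros s Hs. destruct (Qf_inv N s Hs) as [[H0 H1] H2].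
  rewrite Rabs_right by lra.
  destruct (Rle_dec (Rabs s) e).
  - lra.
  - specialize (HN N (le_n N)). rewrite Rabs_right in HN by (apply Rle_ge, pow_le; lra).
    assert ((1 - Rabs s / 2) ^ N <= (1 - e / 2) ^ N) by (apply pow_incr; lra).
    assert (Rabs s * (1 - Rabs s / 2) ^ N <= 1 * (1 - e / 2) ^ N).
    { apply Rmult_le_compat; try lra. apply pow_le; lra. }
    lra.
Qed.

Section Dens.
Variable sigma : R -> R.
Hypothesis sig01 : forall t, 0 <= sigma t <= 1.
Hypothesis sigc : forall t, continuous sigma t.
Variable x0 D : R.
Hypothesis HD : is_derive sigma x0 D.
Hypothesis HDnz : D <> 0.

Notation NR := (NR sigma).
Notation NN := (NN sigma).

Lemma NN_peval l : NN (peval l).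
Proof.
  induction l as [|[c k] l IH]; intros Rr; simpl.
  - apply NR_const.
  - apply NR_plus; auto. apply NR_scal. apply (NN_pow sigma sig01 sigc x0 D HD HDnz).
Qed.

Lemma NN_abs : NN Rabs.
Proof.
  intros Rr. apply NR_mono with (Rabs Rr). apply Rle_abs.
  set (K := Rabs Rr + 1). assert (HK : 1 <= K) by (unfold K; pose proof (Rabs_pos Rr); lra).
  apply NR_lim. intros eps He.
  destruct (Qf_conv (eps / K)) as [n Hn]. apply Rdiv_lt_0_compat; lra.
  destruct (Qf_poly n) as [l Hl].
  exists (fun s => K * peval l (/ K * s + 0)). split.
  - apply NR_scal. apply NR_aff. apply NN_peval.
  - intros s Hs. rewrite <- Hl. replace (/ K * s + 0) with (s / K) by (field; lra).
    replace (Rabs s) with (K * Rabs (s / K)).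
    2:{ rewrite Rabs_div by lra. rewrite (Rabs_right K) by lra. field; lra. }
    rewrite <- Rmult_minus_distr_l, Rabs_mult, (Rabs_right K) by lra.
    assert (Rabs (s / K) <= 1).
    { rewrite Rabs_div by lra. rewrite (Rabs_right K) by lra. apply Rle_div_l. lra. unfold K; lra. }
    specialize (Hn _ H).
    apply Rle_trans with (K * (eps / K)). apply Rmult_le_compat_l; lra. right; field; lra.
Qed.

Lemma NN_tent : NN tent.
Proof.
  intros Rr.
  apply NR_ext with (psi := fun s => / 2 * ((Rabs (1 * s + 1) - 2 * Rabs (1 * s + 0)) + Rabs (1 * s + -1))).
  - intros s _. unfold tent. replace (1 * s + 1) with (s + 1) by ring. replace (1 * s + 0) with s by ring.
    replace (1 * s + -1) with (s - 1) by ring. field.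
  - apply NR_scal. apply NR_plus. apply NR_minus.
    + apply (NR_aff sigma Rabs 1 1). apply NN_abs.
    + apply NR_scal. apply (NR_aff sigma Rabs 1 0). apply NN_abs.
    + apply (NR_aff sigma Rabs 1 (-1)). apply NN_abs.
Qed.

Lemma NN_cont phi : CC phi -> NN phi.
Proof.
  intros Hc Rr. apply NR_mono with (Rabs Rr + 1). pose proof (Rle_abs Rr); lra.
  set (Q := Rabs Rr + 1). assert (HQ : 1 <= Q) by (unfold Q; pose proof (Rabs_pos Rr); lra).
  apply NR_lim. intros eps He.
  destruct (unif_cont phi Hc (- Q) Q eps He) as [mu [Hmu Hu]].
  destruct (INR_archimed mu (2 * Q) Hmu) as [N HN].
  assert (HN0 : (0 < N)%nat). { destruct N; [simpl in HN; lra|lia]. }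
  assert (HNr : 0 < INR N) by (apply lt_0_INR; lia).
  set (hs := 2 * Q / INR N).
  assert (Hhs : 0 < hs) by (unfold hs; apply Rdiv_lt_0_compat; lra).
  assert (Hhsmu : hs <= mu) by (unfold hs; apply Rle_div_l; lra).
  exists (fun s => rsum (fun j => tent (/ hs * s + (Q / hs - INR j)) * phi (- Q + INR j * hs)) 0 (S N)).
  split.
  - apply NR_rsum. intros j. eapply NR_ext; [|apply (NR_scal sigma (phi (- Q + INR j * hs)))].
    2:{ apply (NR_aff sigma tent (/ hs) (Q / hs - INR j)). apply NN_tent. }
    intros; simpl; ring.
  - intros s Hs. apply Rabs_le_inv in Hs.
    set (u := (s + Q) / hs).
    rewrite (rsum_ext _ (fun j => tent (u - INR j) * phi (- Q + INR j * hs))).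
    2:{ intros j _. unfold u. f_equal. f_equal. field. lra. }
    apply partition_bound.
    + unfold u. split. apply Rmult_le_pos. lra. left; apply Rinv_0_lt_compat; lra.
      apply Rle_div_l. lra. unfold hs. replace (INR N * (2 * Q / INR N)) with (2 * Q) by (field; lra). lra.
    + intros j Hj Hclose.
      assert (HjN : INR j <= INR N) by (apply le_INR; lia).
      assert (Hjh : INR j * hs <= 2 * Q).
      { apply Rle_trans with (INR N * hs). apply Rmult_le_compat_r; lra. unfold hs. right; field; lra. }
      assert (Hj0 : 0 <= INR j * hs) by (apply Rmult_le_pos; [apply pos_INR|lra]).
      apply Hu. lra. lra.
      replace (s - (- Q + INR j * hs)) with (hs * (u - INR j)) by (unfold u; field; lra).
      rewrite Rabs_mult, Rabs_right by lra.
      apply Rle_trans with (hs * 1). apply Rmult_le_compat_l; lra. lra.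
Qed.

End Dens.

Fixpoint fn_of (n : nat) : Compactness.Tn n R -> nat -> R :=
  match n with
  | O => fun _ _ => 0
  | S n' => fun t i => match i with O => fst t | S i' => fn_of n' (snd t) i' end
  end.

Fixpoint tn_of (n : nat) (x : nat -> R) : Compactness.Tn n R :=
  match n with
  | O => tt
  | S n' => (x O, tn_of n' (fun i => x (S i)))
  end.

Lemma fn_tn n x i : (i < n)%nat -> fn_of n (tn_of n x) i = x i.
Proof.
  revert x i. induction n; intros x i Hi; [lia|]. destruct i; simpl; auto.
  rewrite IHn by lia. auto.
Qed.

Lemma bounded_cube n t : bounded_n n (tn_of n (fun _ => 0)) (tn_of n (fun _ => 1)) t -> in_cube n (fn_of n t).
Proof.
  revert t. induction n; intros t H i Hi; [lia|].
  destruct t as [t1 t2]. simpl in H. destruct H as [H1 H2].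
  destruct i; simpl; auto. apply IHn; auto. lia.
Qed.

Lemma cube_bounded n x : in_cube n x -> bounded_n n (tn_of n (fun _ => 0)) (tn_of n (fun _ => 1)) (tn_of n x).
Proof.
  revert x. induction n; intros x H; simpl; auto. split.
  apply H; lia. apply IHn. intros i Hi. apply H; lia.
Qed.

Lemma close_fn n e x t : close_n n e x t -> forall i, (i < n)%nat -> Rabs (fn_of n x i - fn_of n t i) < e.
Proof.
  revert x t. induction n; intros x t H i Hi; [lia|].
  destruct x as [x1 x2], t as [t1 t2]. simpl in H. destruct H as [H1 H2].
  destruct i; simpl; auto. apply IHn; auto. lia.
Qed.

Lemma ucont_cube d f : cont_cube d f -> forall eps, 0 < eps -> exists dl, 0 < dl /\
  forall x y, in_cube d x -> in_cube d y -> (forall i, (i < d)%nat -> Rabs (x i - y i) < dl) ->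
    Rabs (f x - f y) <= eps.
Proof.
  intros Hf eps He.
  assert (Hex : forall t : Compactness.Tn d R, exists dl : posreal,
     in_cube d (fn_of d t) -> forall y, in_cube d y -> (forall i, (i < d)%nat -> Rabs (y i - fn_of d t i) < 2 * dl) ->
       Rabs (f y - f (fn_of d t)) < eps / 2).
  { intros t. destruct (classic (in_cube d (fn_of d t))) as [Hc|Hc].
    - destruct (Hf _ Hc (eps / 2)) as [dl [Hdl H]]. lra.
      assert (Hp : 0 < dl / 2) by lra. exists (mkposreal _ Hp). intros _ y Hy Hyi. apply H; auto.
      intros i Hi. specialize (Hyi i Hi). simpl in Hyi. lra.
    - exists (mkposreal 1 Rlt_0_1). intros Hc'. contradiction. }
  set (delta := fun t => proj1_sig (constructive_indefinite_description _ (Hex t))).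
  assert (Hdelta : forall t, in_cube d (fn_of d t) -> forall y, in_cube d y ->
     (forall i, (i < d)%nat -> Rabs (y i - fn_of d t i) < 2 * delta t) -> Rabs (f y - f (fn_of d t)) < eps / 2).
  { intros t. unfold delta. destruct (constructive_indefinite_description _ (Hex t)) as [dl Hdl]. simpl. auto. }
  destruct (compactness_value d (tn_of d (fun _ => 0)) (tn_of d (fun _ => 1)) delta) as [d0 Hd0].
  exists d0. split. apply cond_pos.
  intros x y Hx Hy Hxy. apply NNPP. intros Hneg.
  apply (Hd0 (tn_of d x) (cube_bounded d x Hx)). intros (t & Ht & Hcl & Hle).
  apply Hneg.
  assert (Htc := bounded_cube d t Ht).
  assert (Hcl' := close_fn d _ _ _ Hcl).
  assert (H1 : Rabs (f x - f (fn_of d t)) < eps / 2).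
  { apply Hdelta; auto. intros i Hi. specialize (Hcl' i Hi). rewrite fn_tn in Hcl' by auto.
    pose proof (cond_pos (delta t)). lra. }
  assert (H2 : Rabs (f y - f (fn_of d t)) < eps / 2).
  { apply Hdelta; auto. intros i Hi. specialize (Hcl' i Hi). rewrite fn_tn in Hcl' by auto.
    specialize (Hxy i Hi).
    replace (y i - fn_of d t i) with ((x i - fn_of d t i) - (x i - y i)) by ring.
    eapply Rle_lt_trans. apply Rabs_triang. rewrite Rabs_Ropp. lra. }
  replace (f x - f y) with ((f x - f (fn_of d t)) - (f y - f (fn_of d t))) by ring.
  eapply Rle_trans. apply Rabs_triang. rewrite Rabs_Ropp. lra.
Qed.

Local Arguments rsum : simpl never.

Definition upd (c : nat -> nat) (m j : nat) : nat -> nat := fun i => if Nat.eqb i m then j else c i.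

Fixpoint SG (N m : nat) (F : (nat -> nat) -> R) : R :=
  match m with
  | O => F (fun _ => O)
  | S m' => rsum (fun j => SG N m' (fun c => F (upd c m' j))) 0 (S N)
  end.

Fixpoint PP (N : nat) (x : nat -> R) (m : nat) (c : nat -> nat) : R :=
  match m with
  | O => 1
  | S m' => PP N x m' c * tent (INR N * x m' - INR (c m'))
  end.

Lemma SG_ext N m F G : (forall c, F c = G c) -> SG N m F = SG N m G.
Proof. revert F G; induction m; intros F G H; simpl; auto. apply rsum_ext. intros; apply IHm; auto. Qed.

Lemma SG_lin N m a F G : SG N m (fun c => a * F c + G c) = a * SG N m F + SG N m G.
Proof.
  revert F G; induction m; intros F G; simpl; auto.
  rewrite (rsum_ext _ (fun j => a * SG N m (fun c => F (upd c m j)) + SG N m (fun c => G (upd c m j)))).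
  rewrite rsum_plus, rsum_scal. auto. intros; apply IHm.
Qed.

Lemma PP_ext N x m c c' : (forall i, (i < m)%nat -> c i = c' i) -> PP N x m c = PP N x m c'.
Proof. induction m; intros H; simpl; auto. rewrite IHm by (intros; apply H; lia). rewrite H by lia. auto. Qed.

Lemma PP_upd N x m c j : PP N x (S m) (upd c m j) = PP N x m c * tent (INR N * x m - INR j).
Proof.
  simpl. rewrite (PP_ext N x m (upd c m j) c). unfold upd. rewrite Nat.eqb_refl. auto.
  intros i Hi. unfold upd. replace (Nat.eqb i m) with false by (symmetry; apply Nat.eqb_neq; lia). auto.
Qed.

Lemma SG_PP_one N x m : (0 < N)%nat -> in_cube m x -> SG N m (PP N x m) = 1.
Proof.
  intros HN. induction m; intros Hx. reflexivity. cbn [SG].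
  rewrite (rsum_ext _ (fun j => tent (INR N * x m - INR j) * SG N m (PP N x m))).
  - rewrite IHm. rewrite (rsum_ext _ (fun j => tent (INR N * x m - INR j))) by (intros; ring).
    apply partition. specialize (Hx m ltac:(lia)). split. apply Rmult_le_pos; [apply pos_INR|lra].
    apply Rle_trans with (INR N * 1). apply Rmult_le_compat_l; [apply pos_INR|lra]. lra.
    intros i Hi; apply Hx; lia.
  - intros j _. rewrite (SG_ext N m _ (fun c => tent (INR N * x m - INR j) * PP N x m c + 0)).
    rewrite SG_lin. simpl. replace (SG N m (fun _ => 0)) with 0. ring.
    { clear. induction m; simpl; auto. rewrite (rsum_ext _ (fun _ => 0)). rewrite rsum_zero; auto. intros; auto. }
    intros c. rewrite PP_upd. ring.
Qed.

Lemma SG_PP_bound N x m : (0 < N)%nat -> in_cube m x -> forall H w,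
  (forall c, (forall i, (i < m)%nat -> Rabs (INR N * x i - INR (c i)) < 1) -> Rabs (H c) <= w) ->
  Rabs (SG N m (fun c => PP N x m c * H c)) <= w.
Proof.
  intros HN. induction m; intros Hx H w HH; cbn [SG].
  - simpl. rewrite Rmult_1_l. apply HH. intros; lia.
  - assert (Hxm : 0 <= INR N * x m <= INR N).
    { specialize (Hx m ltac:(lia)). split. apply Rmult_le_pos; [apply pos_INR|lra].
      apply Rle_trans with (INR N * 1). apply Rmult_le_compat_l; [apply pos_INR|lra]. lra. }
    rewrite (rsum_ext _ (fun j => tent (INR N * x m - INR j) * SG N m (fun c => PP N x m c * H (upd c m j)))).
    2:{ intros j _. rewrite (SG_ext N m _ (fun c => tent (INR N * x m - INR j) * (PP N x m c * H (upd c m j)) + 0)).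
        rewrite SG_lin. replace (SG N m (fun _ => 0)) with 0. ring.
        { clear. induction m; simpl; auto. rewrite (rsum_ext _ (fun _ => 0)). rewrite rsum_zero; auto. intros; auto. }
        intros c. rewrite PP_upd. ring. }
    replace w with (w * 1) by ring. rewrite <- (partition N (INR N * x m)) by auto.
    rewrite <- rsum_scal. eapply Rle_trans. apply rsum_abs. apply rsum_le. intros j Hj.
    rewrite Rabs_mult. rewrite (Rabs_right (tent _)) by (apply Rle_ge, tent_range).
    destruct (tent_range (INR N * x m - INR j)) as [[Ht|Ht] _].
    + rewrite Rmult_comm. apply Rmult_le_compat_r; [lra|].
      apply IHm. intros i Hi; apply Hx; lia.
      intros c Hc. apply HH. intros i Hi. unfold upd. destruct (Nat.eqb i m) eqn:E.
      * apply Nat.eqb_eq in E; subst. apply tent_pos_close; auto.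
      * apply Hc. apply Nat.eqb_neq in E. lia.
    + rewrite <- Ht. lra.
Qed.

Local Arguments rsum : simpl never.

Lemma cpt_aff a b x : continuity_pt (fun s => a * s + b) x.
Proof. apply continuity_pt_plus. apply continuity_pt_scal. apply derivable_continuous_pt; apply derivable_pt_id.
  apply continuity_pt_const; intros u v; auto. Qed.

Lemma CC_of_cpt g : (forall x, continuity_pt g x) -> CC g.
Proof. intros H x. apply continuity_pt_filterlim. apply H. Qed.

Lemma cpt_of_CC g : CC g -> forall x, continuity_pt g x.
Proof. intros H x. apply continuity_pt_filterlim. apply H. Qed.

Lemma CC_net sigma (sigc : forall t, continuous sigma t) c0 l : CC (fun z => c0 + nsum sigma l z).
Proof.
  apply CC_of_cpt. intros x. apply continuity_pt_plus. apply continuity_pt_const; intros u v; auto.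
  induction l as [|[[c a] b] l IH]; simpl.
  - apply continuity_pt_const; intros u v; auto.
  - apply continuity_pt_plus; auto. apply continuity_pt_scal.
    apply continuity_pt_comp with (f1 := fun s => a * s + b). apply cpt_aff.
    apply continuity_pt_filterlim. apply sigc.
Qed.

Lemma CC_lntent N ci eta : 0 < eta -> CC (fun s => ln (tent (INR N * s - INR ci) + eta)).
Proof.
  intros He. apply CC_of_cpt. intros x.
  apply continuity_pt_comp with (f1 := fun s => tent (INR N * s - INR ci) + eta).
  - apply continuity_pt_plus. apply continuity_pt_comp with (f1 := fun s => INR N * s + - INR ci).
    apply cpt_aff. apply cpt_of_CC. apply CC_tent. apply continuity_pt_const; intros u v; auto.
  - apply continuity_pt_filterlim. apply continuous_ln. pose proof (tent_range (INR N * x - INR ci)). lra.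
Qed.

Lemma CC_bounded sigma (sig01 : forall t, 0 <= sigma t <= 1) (sigc : forall t, continuous sigma t)
  x0 D (HD : is_derive sigma x0 D) (HDnz : D <> 0) g : CC g -> exists B, forall s, Rabs s <= 1 -> Rabs (g s) <= B.
Proof.
  intros Hc. destruct (NN_cont sigma sig01 sigc x0 D HD HDnz g Hc 1 1 Rlt_0_1) as (l & c0 & H).
  exists (1 + Rabs c0 + nabs l). intros s Hs. specialize (H s Hs).
  assert (Hn := nsum_bound sigma l s sig01).
  replace (g s) with ((g s - (c0 + nsum sigma l s)) + c0 + nsum sigma l s) by ring.
  eapply Rle_trans. apply Rabs_triang. eapply Rle_trans. apply Rplus_le_compat_r. apply Rabs_triang. lra.
Qed.

Section Addable.
Variable sigma : R -> R.
Variable d p : nat.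
Hypothesis sig01 : forall t, 0 <= sigma t <= 1.
Hypothesis sigc : forall t, continuous sigma t.
Variable x0 D : R.
Hypothesis HD : is_derive sigma x0 D.
Hypothesis HDnz : D <> 0.
Hypothesis Hp : (d + 3 <= p)%nat.

Notation E := (approxE sigma d p).
Notation st := (st d).
Notation bnd := (bnd d).
Notation z0 := (fun _ : nat -> R => 0).

Definition Addb (g : (nat -> R) -> R) := bnd g /\
  forall a, bnd a -> E (st a z0 z0) -> E (st (fun x => a x + g x) z0 z0).

Lemma Addb_zero : Addb z0.
Proof.
  split. apply bnd_const. intros a Ha HE. eapply st_ext; [|apply HE]. intros; simpl; split; [ring|auto].
Qed.

Lemma Addb_plus g1 g2 : Addb g1 -> Addb g2 -> Addb (fun x => g1 x + g2 x).
Proof.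
  intros [B1 H1] [B2 H2]. split. apply bnd_plus; auto.
  intros a Ha HE. specialize (H1 a Ha HE).
  specialize (H2 (fun x => a x + g1 x) (bnd_plus _ _ _ Ha B1) H1).
  eapply st_ext; [|apply H2]. intros; simpl; split; [ring|auto].
Qed.

Lemma Addb_rsum (G : nat -> (nat -> R) -> R) m n : (forall j, Addb (G j)) -> Addb (fun x => rsum (fun j => G j x) m n).
Proof.
  intros H. revert m. induction n; intros m.
  - destruct Addb_zero as [B HH]. split. exact B. intros a Ha HE. exact (HH a Ha HE).
  - assert (E1 : forall x, rsum (fun j => G j x) m (S n) = G m x + rsum (fun j => G j x) (S m) n) by (intros; reflexivity).
    destruct (Addb_plus _ _ (H m) (IHn (S m))) as [B HH]. split.
    + destruct B as [Bb HB]. exists Bb. intros x Hx. rewrite E1. auto.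
    + intros a Ha HE. eapply st_ext; [|apply (HH a Ha HE)]. intros x _. rewrite E1. simpl; auto.
Qed.

Lemma Addb_SG N m (F : (nat -> nat) -> (nat -> R) -> R) : (forall c, Addb (F c)) -> Addb (fun x => SG N m (fun c => F c x)).
Proof.
  revert F. induction m; intros F H; cbn [SG].
  - apply H.
  - apply (Addb_rsum (fun j x => SG N m (fun c => F (upd c m j) x))). intros j. apply IHm. intros c; apply H.
Qed.

Lemma Addb_lim g : bnd g -> (forall eps, 0 < eps -> exists g', bnd g' /\ 
   (forall a, bnd a -> E (st a z0 z0) -> E (st (fun x => a x + g' x) z0 z0)) /\
   forall x, in_cube d x -> Rabs (g' x - g x) <= eps) -> Addb g.
Proof.
  intros Hb H. split; auto. intros a Ha HE. apply approxE_lim. intros eps He.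
  destruct (H eps He) as (g' & Hb' & Hg' & Hc). exists (st (fun x => a x + g' x) z0 z0). split; auto.
  intros x Hx k Hk. unfold stP3. destruct (Nat.ltb k d). rewrite Rminus_diag, Rabs_R0; lra.
  destruct (Nat.eqb k d). replace (a x + g' x - (a x + g x)) with (g' x - g x) by ring. auto.
  destruct (Nat.eqb k (S d)); [|destruct (Nat.eqb k (S (S d)))]; rewrite Rminus_diag, Rabs_R0; lra.
Qed.

End Addable.

Local Arguments rsum : simpl never.

Lemma exp_mono x y : x <= y -> exp x <= exp y.
Proof. intros H. destruct (Rle_lt_or_eq_dec x y H) as [H'|H']. left; apply exp_increasing; auto. subst; lra. Qed.

Fixpoint PPe (N : nat) (x : nat -> R) (m : nat) (c : nat -> nat) (eta : R) : R :=
  match m with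
  | O => 1
  | S m' => PPe N x m' c eta * (tent (INR N * x m' - INR (c m')) + eta)
  end.

Lemma exp_rsum_ln N x m c eta : 0 < eta ->
  exp (rsum (fun i => ln (tent (INR N * x i - INR (c i)) + eta)) 0 m) = PPe N x m c eta.
Proof.
  intros He. induction m.
  - simpl. apply exp_0.
  - rewrite rsum_last. simpl (0 + m)%nat. rewrite exp_plus, IHm. rewrite exp_ln. reflexivity.
    pose proof (tent_range (INR N * x m - INR (c m))). lra.
Qed.

Lemma PPe_PP N x m c eta : 0 <= eta <= 1 ->
  (0 <= PP N x m c <= 1 /\ PP N x m c <= PPe N x m c eta <= 2 ^ m /\ PPe N x m c eta - PP N x m c <= eta * (2 ^ m - 1)).
Proof.
  intros He. induction m.
  - simpl. lra.
  - simpl. destruct IHm as [[H1 H2] [[H3 H4] H5]].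
    set (t := tent (INR N * x m - INR (c m))). assert (Ht : 0 <= t <= 1) by apply tent_range.
    set (P := PP N x m c) in *. set (Q := PPe N x m c eta) in *.
    split; [split; nra|]. split; [split; nra|]. nra.
Qed.

Section Prod.
Variable sigma : R -> R.
Variable d p : nat.
Hypothesis sig01 : forall t, 0 <= sigma t <= 1.
Hypothesis sigc : forall t, continuous sigma t.
Variable x0 D : R.
Hypothesis HD : is_derive sigma x0 D.
Hypothesis HDnz : D <> 0.
Hypothesis Hp : (d + 3 <= p)%nat.

Notation E := (approxE sigma d p).
Notation st := (st d).
Notation bnd := (bnd d).
Notation z0 := (fun _ : nat -> R => 0).

Lemma sum_bound (l : nat -> R -> R) : (forall i, CC (l i)) -> forall m, (m <= d)%nat -> exists Hb,
  forall x, in_cube d x -> Rabs (rsum (fun i => l i (x i)) 0 m) <= Hb.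
Proof.
  intros Hc. induction m; intros Hm.
  - exists 0. intros. unfold rsum. rewrite Rabs_R0; lra.
  - destruct IHm as [Hb H]; [lia|].
    destruct (CC_bounded sigma sig01 sigc x0 D HD HDnz (l m) (Hc m)) as [B HB].
    exists (Hb + B). intros x Hx. rewrite rsum_last. simpl (0 + m)%nat.
    eapply Rle_trans. apply Rabs_triang. specialize (H x Hx).
    assert (Rabs (l m (x m)) <= B). { apply HB. specialize (Hx m ltac:(lia)). apply Rabs_le; lra. }
    lra.
Qed.

Lemma nets_sum (l : nat -> R -> R) : (forall i, CC (l i)) -> forall eta, 0 < eta -> forall m, (m <= d)%nat ->
  exists h, bnd h /\ (forall a, bnd a -> E (st a z0 z0) -> E (st a h z0)) /\
    forall x, in_cube d x -> Rabs (h x - rsum (fun i => l i (x i)) 0 m) <= INR m * eta.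
Proof.
  intros Hc eta He. induction m; intros Hm.
  - exists z0. split. apply bnd_const. split. auto.
    intros. unfold rsum. simpl. rewrite Rminus_0_r, Rabs_R0; lra.
  - destruct IHm as (h & Hb & Hprog & Herr); [lia|].
    destruct (NN_cont sigma sig01 sigc x0 D HD HDnz (l m) (Hc m) 1 eta He) as (ln0 & c0 & Hn).
    exists (fun x => h x + (c0 + nsum sigma ln0 (x m))). split.
    { apply bnd_plus; auto. apply bnd_plus. apply bnd_const. apply bnd_nsum; auto. }
    split.
    { intros a Ha HE. apply (add_t_net sigma d p sig01 sigc x0 D HD HDnz Hp m ln0 c0 a h); auto; lia. }
    intros x Hx. rewrite rsum_last. simpl (0 + m)%nat. rewrite S_INR.
    specialize (Herr x Hx).
    assert (Rabs (l m (x m) - (c0 + nsum sigma ln0 (x m))) <= eta).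
    { apply Hn. specialize (Hx m ltac:(lia)). apply Rabs_le; lra. }
    replace (h x + (c0 + nsum sigma ln0 (x m)) - (rsum (fun i => l i (x i)) 0 m + l m (x m))) with
      ((h x - rsum (fun i => l i (x i)) 0 m) - (l m (x m) - (c0 + nsum sigma ln0 (x m)))) by ring.
    eapply Rle_trans. apply Rabs_triang. rewrite Rabs_Ropp. lra.
Qed.

Lemma Addb_expsum K (l : nat -> R -> R) : (forall i, CC (l i)) ->
  Addb sigma d p (fun x => K * exp (rsum (fun i => l i (x i)) 0 d)).
Proof.
  intros Hc. destruct (sum_bound l Hc d (le_n d)) as [Hb HHb].
  assert (Hb0 : 0 <= Hb \/ ~ (exists x : nat -> R, in_cube d x)).
  { destruct (Rle_dec 0 Hb). left; auto. right. intros [x Hx]. specialize (HHb x Hx). pose proof (Rabs_pos (rsum (fun i => l i (x i)) 0 d)). lra. }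
  assert (Hcube : exists x : nat -> R, in_cube d x) by (exists (fun _ => 0); intros i _; lra).
  destruct Hb0 as [Hb0|Hb0]; [|contradiction].
  apply Addb_lim.
  { exists (Rabs K * exp Hb). intros x Hx. rewrite Rabs_mult. apply Rmult_le_compat_l. apply Rabs_pos.
    rewrite Rabs_right by (apply Rle_ge; left; apply exp_pos). apply exp_mono.
    specialize (HHb x Hx). apply Rabs_le_inv in HHb. lra. }
  intros eps He.
  assert (HPhi : CC (fun z => K * exp z)).
  { apply CC_of_cpt. intros z. apply continuity_pt_scal. apply derivable_continuous_pt. apply derivable_pt_exp. }
  destruct (NN_cont sigma sig01 sigc x0 D HD HDnz _ HPhi (Hb + 1) (eps / 2)) as (l0 & c00 & Hn0). lra.
  destruct (unif_cont _ (CC_net sigma sigc c00 l0) (- Hb - 1) (Hb + 1) (eps / 2)) as [mu [Hmu Hu]]. lra.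
  set (eta := Rmin 1 mu / (INR d + 1)).
  assert (Hm : 0 < Rmin 1 mu <= 1) by (split; [apply Rmin_glb_lt; lra|apply Rmin_l]).
  assert (Hmm : Rmin 1 mu <= mu) by apply Rmin_r.
  assert (Hd0 : 0 <= INR d) by apply pos_INR.
  assert (Heta : 0 < eta) by (unfold eta; apply Rdiv_lt_0_compat; lra).
  assert (Hdeta : INR d * eta <= Rmin 1 mu).
  { unfold eta. apply Rle_trans with ((INR d + 1) * (Rmin 1 mu / (INR d + 1))).
    apply Rmult_le_compat_r; [left; apply Rdiv_lt_0_compat; lra | lra]. right; field; lra. }
  destruct (nets_sum l Hc eta Heta d (le_n d)) as (h & Hbh & Hprog & Herr).
  exists (fun x => c00 + nsum sigma l0 (h x)). split.
  { apply bnd_plus. apply bnd_const. apply bnd_nsum; auto. }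
  split.
  - intros a Ha HE. specialize (Hprog a Ha HE).
    assert (H2 := add_a_net sigma d p sig01 sigc x0 D HD HDnz Hp l0 c00 a h Hprog Ha Hbh).
    apply (reset_t sigma d p sigc x0 D HD HDnz Hp _ h H2).
    apply bnd_plus; auto. apply bnd_plus. apply bnd_const. apply bnd_nsum; auto. auto.
  - intros x Hx. specialize (Herr x Hx). specialize (HHb x Hx).
    set (hx := rsum (fun i => l i (x i)) 0 d) in *.
    assert (Hh : Rabs (h x - hx) <= Rmin 1 mu) by lra.
    apply Rabs_le_inv in HHb. apply Rabs_le_inv in Hh as Hh'.
    assert (H1 : Rabs (c00 + nsum sigma l0 (h x) - (c00 + nsum sigma l0 hx)) <= eps / 2).
    { apply Hu; try lra. }
    assert (H2 : Rabs (K * exp hx - (c00 + nsum sigma l0 hx)) <= eps / 2).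
    { apply Hn0. apply Rabs_le; lra. }
    replace (c00 + nsum sigma l0 (h x) - K * exp hx) with
      ((c00 + nsum sigma l0 (h x) - (c00 + nsum sigma l0 hx)) - (K * exp hx - (c00 + nsum sigma l0 hx))) by ring.
    eapply Rle_trans. apply Rabs_triang. rewrite Rabs_Ropp. lra.
Qed.

Lemma Addb_prod N c K : Addb sigma d p (fun x => K * PP N x d c).
Proof.
  apply Addb_lim.
  { exists (Rabs K). intros x Hx. rewrite Rabs_mult.
    destruct (PPe_PP N x d c 0 ltac:(lra)) as [[H1 H2] _].
    rewrite (Rabs_right (PP _ _ _ _)) by lra. pose proof (Rabs_pos K). nra. }
  intros eps He.
  set (eta := Rmin 1 (eps / (Rabs K * 2 ^ d + 1))).
  assert (H2d : 0 < 2 ^ d) by (apply pow_lt; lra).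
  assert (HK := Rabs_pos K).
  assert (Heta : 0 < eta <= 1).
  { unfold eta. split. apply Rmin_glb_lt. lra. apply Rdiv_lt_0_compat. lra. nra. apply Rmin_l. }
  assert (Heta2 : eta * (Rabs K * 2 ^ d + 1) <= eps).
  { apply Rle_trans with (eps / (Rabs K * 2 ^ d + 1) * (Rabs K * 2 ^ d + 1)).
    apply Rmult_le_compat_r. nra. apply Rmin_r. right; field; nra. }
  set (l := fun i s => ln (tent (INR N * s - INR (c i)) + eta)).
  assert (Hl : forall i, CC (l i)) by (intros i; apply CC_lntent; lra).
  destruct (Addb_expsum K l Hl) as [Hb Hprog].
  exists (fun x => K * exp (rsum (fun i => l i (x i)) 0 d)). split; auto. split; auto.
  intros x Hx. unfold l. rewrite exp_rsum_ln by lra.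
  destruct (PPe_PP N x d c eta ltac:(lra)) as [_ [[H1 H2] H3]].
  rewrite <- Rmult_minus_distr_l, Rabs_mult, (Rabs_right (PPe N x d c eta - PP N x d c)) by lra.
  apply Rle_trans with (Rabs K * (eta * (2 ^ d - 1))). apply Rmult_le_compat_l; lra.
  nra.
Qed.

End Prod.

Local Arguments rsum : simpl never.

Lemma SG_zero N m : SG N m (fun _ => 0) = 0.
Proof. induction m; cbn [SG]; auto. rewrite (rsum_ext _ (fun _ => 0)). apply rsum_zero. intros; auto. Qed.

Lemma layer_range sigma d p W1 b1 W bl n x k : (forall t, 0 <= sigma t <= 1) ->
  0 <= layer sigma d p W1 b1 W bl n x k <= 1.
Proof. intros H. destruct n; simpl; apply H. Qed.

Definition pt (N : nat) (c : nat -> nat) : nat -> R := fun i => INR (c i) / INR N.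

Lemma grid_approx d f N dl e : (0 < N)%nat -> 0 < dl -> INR N * dl > 1 ->
  (forall x y, in_cube d x -> in_cube d y -> (forall i, (i < d)%nat -> Rabs (x i - y i) < dl) -> Rabs (f x - f y) <= e) ->
  forall x, in_cube d x -> Rabs (f x - SG N d (fun c => f (pt N c) * PP N x d c)) <= e.
Proof.
  intros HN Hdl HNd Hu x Hx.
  assert (HNr : 0 < INR N) by (apply lt_0_INR; lia).
  assert (E : f x - SG N d (fun c => f (pt N c) * PP N x d c) = SG N d (fun c => PP N x d c * (f x - f (pt N c)))).
  { rewrite (SG_ext N d (fun c => PP N x d c * (f x - f (pt N c)))
       (fun c => f x * PP N x d c + (-1 * (f (pt N c) * PP N x d c) + 0))) by (intros; ring).
    rewrite SG_lin, SG_lin, SG_zero, SG_PP_one; auto. ring. }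
  rewrite E. apply SG_PP_bound; auto.
  intros c Hc. apply Hu; auto.
  - intros i Hi. specialize (Hc i Hi). specialize (Hx i Hi).
    pose proof (Rabs_def2 _ _ Hc) as [Ha Hb].
    unfold pt. split. apply Rmult_le_pos. apply pos_INR. left; apply Rinv_0_lt_compat; auto.
    apply Rle_div_l; auto. rewrite Rmult_1_l.
    assert (INR (c i) < INR (S N)). { rewrite S_INR. assert (INR N * x i <= INR N) by nra. lra. }
    apply INR_lt in H. apply le_INR. lia.
  - intros i Hi. specialize (Hc i Hi). unfold pt.
    replace (x i - INR (c i) / INR N) with ((INR N * x i - INR (c i)) / INR N) by (field; lra).
    rewrite Rabs_div by lra. rewrite (Rabs_right (INR N)) by lra.
    apply Rlt_le_trans with (1 / INR N). apply Rmult_lt_compat_r. apply Rinv_0_lt_compat; auto. auto.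
    apply Rle_div_l; auto. lra.
Qed.

Lemma sum0_single p d (T : nat -> R) (q : nat -> nat) (c : nat -> nat -> R) (B : nat -> nat -> R -> R) y qd cd :
  (d < p)%nat ->
  sum0 p (fun k => sum1 ((fun k => if Nat.eqb k d then qd else 1%nat) k)
            (fun r => (fun k r => if Nat.eqb k d then cd r else 0) k r * B k r (y k))) =
  sum1 qd (fun r => cd r * B d r (y d)).
Proof.
  intros Hd. unfold sum0.
  rewrite (rsum_ext _ (fun k => (if Nat.eqb k d then 1 else 0) * sum1 qd (fun r => cd r * B d r (y d)))).
  apply (rsum_delta (fun _ => sum1 qd (fun r => cd r * B d r (y d)))). lia.
  intros k _. destruct (Nat.eqb k d) eqn:E.
  - apply Nat.eqb_eq in E; subst. ring.
  - unfold sum1. simpl. rewrite Rmult_0_l. unfold rsum. ring.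
Qed.

Theorem theorem3 (d p : nat) (B : nat -> nat -> R -> R) (sigma : R -> R) :
  (1 <= d)%nat -> (d + 3 <= p)%nat ->
  (forall k, (k < p)%nat -> is_basis (B k)) ->
  (forall t, 0 <= sigma t <= 1) ->
  (forall t, continuous sigma t) ->
  (exists x0, C1_at_nonzero sigma x0) ->
  forall f : (nat -> R) -> R, cont_cube d f ->
  forall eps, 0 < eps ->
  exists (L : nat) (W1 : nat -> nat -> R) (b1 : nat -> R)
         (W : nat -> nat -> nat -> R) (bl : nat -> nat -> R)
         (q : nat -> nat) (c : nat -> nat -> R) (b0 : R),
    (1 <= L)%nat /\ (forall k, (k < p)%nat -> (1 <= q k)%nat) /\
    exists M, M < eps /\
      forall x, in_cube d x ->
        Rabs (f x - HDANN2 sigma d p B L W1 b1 W bl q c b0 x) <= M.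
Proof.
  intros Hd Hp HB sig01 sigc [x0 [[dl0 [Hdl0 Hder]] [_ HDnz]]] f Hf eps He.
  assert (Hex : ex_derive sigma x0) by (apply Hder; rewrite Rminus_diag, Rabs_R0; lra).
  assert (HD : is_derive sigma x0 (Derive sigma x0)) by (apply Derive_correct; auto).
  set (D := Derive sigma x0) in *.
  set (e := eps / 4).
  assert (Hee : 0 < e) by (unfold e; lra).
  destruct (ucont_cube d f Hf e Hee) as [dl [Hdl Hu]].
  destruct (INR_archimed dl 1 Hdl) as [N HN].
  assert (HN0 : (0 < N)%nat). { destruct N; [simpl in HN; lra|lia]. }
  set (G := fun x => SG N d (fun c => f (pt N c) * PP N x d c)).
  assert (HAG : Addb sigma d p G).
  { apply (Addb_SG sigma d p N d (fun c x => f (pt N c) * PP N x d c)). intros c.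
    apply (Addb_prod sigma d p sig01 sigc x0 D HD HDnz Hp N c). }
  assert (HEG : approxE sigma d p (st d (fun x => 0 + G x) (fun _ => 0) (fun _ => 0))).
  { apply (proj2 HAG). apply bnd_const. apply (start sigma d p sigc x0 D HD HDnz Hp). }
  destruct (HEG e Hee) as (n & W1 & b1 & W & bl & a & s & Hn).
  assert (Hdp : (d < p)%nat) by lia.
  destruct (HB d Hdp (fun y => a d + s d * y)) with (eps := e) as (q & cc & c0 & Hq & Hbas); auto.
  { intros y Hy ep Hep. exists (ep / (Rabs (s d) + 1)). split.
    apply Rdiv_lt_0_compat; auto. pose proof (Rabs_pos (s d)); lra.
    intros z Hz Hzy. replace (a d + s d * z - (a d + s d * y)) with (s d * (z - y)) by ring.
    rewrite Rabs_mult. pose proof (Rabs_pos (s d)).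
    apply Rle_lt_trans with (Rabs (s d) * (ep / (Rabs (s d) + 1))).
    apply Rmult_le_compat_l; lra.
    apply Rlt_le_trans with ((Rabs (s d) + 1) * (ep / (Rabs (s d) + 1))).
    apply Rmult_lt_compat_r. apply Rdiv_lt_0_compat; lra. lra. right; field; lra. }
  exists (S n), W1, b1, W, bl, (fun k => if Nat.eqb k d then q else 1%nat),
    (fun k r => if Nat.eqb k d then cc r else 0), c0.
  split; [lia|]. split.
  { intros k _. destruct (Nat.eqb k d); lia. }
  exists (3 * e). split. unfold e; lra.
  intros x Hx. unfold HDANN2. simpl pred.
  rewrite (sum0_single p d (fun _ => 0) (fun _ => 0%nat) (fun _ _ => 0)) by auto.
  set (y := layer sigma d p W1 b1 W bl n x).
  specialize (Hn x Hx d Hdp). unfold stP3 in Hn.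
  replace (Nat.ltb d d) with false in Hn by (symmetry; apply Nat.ltb_ge; lia).
  rewrite Nat.eqb_refl in Hn. fold y in Hn. unfold Lay in Hn. fold y in Hn.
  assert (Hy := layer_range sigma d p W1 b1 W bl n x d sig01). fold y in Hy.
  specialize (Hbas (y d) Hy).
  assert (Hg := grid_approx d f N dl e HN0 Hdl HN Hu x Hx). fold (G x) in Hg.
  replace (f x - (sum1 q (fun r => cc r * B d r (y d)) + c0)) with
    ((f x - G x) - (a d + s d * y d - (0 + G x)) + (a d + s d * y d - (sum1 q (fun r => cc r * B d r (y d)) + c0))) by ring.
  eapply Rle_trans. apply Rabs_triang. eapply Rle_trans. apply Rplus_le_compat_r. apply Rabs_triang.
  rewrite Rabs_Ropp. lra.
Qed.
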